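(* Let $G$ be a connected graph and $U \subseteq V(G)$ an uncountable set of vertices such that every $U$-rooted minor of $G$ with countable branch sets has countable colouring number. Let $(T,\mathcal V)$ be a slim $U$-rooted normal semi-partition tree of $G$ with $U \subseteq V(G(T))$, and let $\kappa = |T|$. Then $T$ can be written as a continuous increasing union $T=\bigcup_{i<\mathrm{cf}(\kappa)} T_i$ of infinite rooted subtrees $T_i$ with $|T_i|<|T|$ such that every $G(T_i)$ has finite adhesion in $G$ towards $U$.
   Context: Minors are given by disjoint connected branch sets; a minor is $U$-rooted if every branch set meets $U$. A graph has countable colouring number if its vertices admit a well-order in which each vertex is preceded by only finitely many of its neighbours. An order tree is a poset with unique minimal element in which every down-closure $\lceil t\rceil$ is well-ordered; $\mathring{\lceil t\rceil}=\lceil t\rceil\setminus\{t\}$; height of $t$ = order type of $\mathring{\lceil t\rceil}$; rooted subtree = down-closed subset. A $T$-graph is a graph on $T$ with comparable endvertices on every edge and with lower neighbours of each $t$ cofinal in $\mathring{\lceil t\rceil}$. $(T,(V_t)_{t\in T})$ with nonempty $V_t\subseteq V(G)$ is a normal semi-partition tree if the $V_t$ are pairwise disjoint, each $G[V_t]$ is connected, contracting each $V_t$ in $G[\bigcup_t V_t]$ gives a $T$-graph, and for every path in $G$ with at least one edge, endvertices in $V_t$ and $V_{t'}$, inner vertices outside $\bigcup V_s$ and no edges inside $G[\bigcup V_s]$, $t$ and $t'$ are comparable. It is slim if $|V_t|\le|\mathrm{height}(t)|+\aleph_0$, and $U$-rooted if every $V_t$ meets $U$. $G(S)=G[\bigcup_{t\in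 S}V_t]$. An induced subgraph $H$ has finite adhesion in $G$ towards $U$ if every component of $G-H$ containing a vertex of $U$ has only finitely many neighbours in $H$. Continuous means $T_\ell=\bigcup_{i<\ell}T_i$ for limit $\ell$. *)

(* Defs.v *)
From Stdlib Require Import List.
Import ListNotations.

Definition card_le {X Y : Type} (A : X -> Prop) (B : Y -> Prop) : Prop :=
  exists f : X -> Y, (forall x, A x -> B (f x)) /\
                     (forall x y, A x -> A y -> f x = f y -> x = y).
Definition card_lt {X Y : Type} (A : X -> Prop) (B : Y -> Prop) : Prop :=
  card_le A B /\ ~ card_le B A.
Definition card_eq {X Y : Type} (A : X -> Prop) (B : Y -> Prop) : Prop :=
  card_le A B /\ card_le B A.
Definition finite_set {X : Type} (A : X -> Prop) : Prop :=
  exists l : list X, forall x, A x -> In x l.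
Definition countable_set {X : Type} (A : X -> Prop) : Prop :=
  card_le A (fun _ : nat => True).

Definition well_order_on {X : Type} (A : X -> Prop) (R : X -> X -> Prop) : Prop :=
  (forall x, A x -> ~ R x x) /\
  (forall x y z, A x -> A y -> A z -> R x y -> R y z -> R x z) /\
  (forall x y, A x -> A y -> x = y \/ R x y \/ R y x) /\
  (forall S : X -> Prop, (forall x, S x -> A x) -> (exists x, S x) ->
     exists m, S m /\ forall y, S y -> y = m \/ R m y).

Definition simple_graph {V : Type} (adj : V -> V -> Prop) : Prop :=
  (forall x y, adj x y -> adj y x) /\ (forall x, ~ adj x x).

(* x :: l is a walk (consecutive vertices related by R) *)
Fixpoint walk {V : Type} (R : V -> V -> Prop) (x : V) (l : list V) : Prop :=
  match l with
  | [] => True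
  | y :: l' => R x y /\ walk R y l'
  end.

Definition connected_in {V : Type} (adj : V -> V -> Prop) (X : V -> Prop) : Prop :=
  forall x y, X x -> X y ->
    exists l, walk adj x l /\ last l x = y /\ Forall X l.

Definition graph_connected {V : Type} (adj : V -> V -> Prop) : Prop :=
  connected_in adj (fun _ => True).

Definition countable_colouring_number {W : Type} (P : W -> Prop)
  (adjH : W -> W -> Prop) : Prop :=
  exists R : W -> W -> Prop, well_order_on P R /\
    forall w, P w -> finite_set (fun w' => P w' /\ adjH w w' /\ R w' w).

Definition branch_sets {V : Type} (adj : V -> V -> Prop)
  (Bs : (V -> Prop) -> Prop) : Prop :=
  (forall X, Bs X -> exists x, X x) /\
  (forall X Y x, Bs X -> Bs Y -> X <> Y -> X x -> Y x -> False) /\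
  (forall X, Bs X -> connected_in adj X).

(* the minor given by the branch sets: vertices are the branch sets, two are
   adjacent iff G has an edge between them *)
Definition minor_adj {V : Type} (adj : V -> V -> Prop) (X Y : V -> Prop) : Prop :=
  X <> Y /\ exists x y, X x /\ Y y /\ adj x y.

Definition rooted_branch_sets {V : Type} (U : V -> Prop)
  (Bs : (V -> Prop) -> Prop) : Prop :=
  forall X, Bs X -> exists x, X x /\ U x.

Definition tlt {T : Type} (le : T -> T -> Prop) (s t : T) : Prop := le s t /\ s <> t.

Definition order_tree {T : Type} (le : T -> T -> Prop) : Prop :=
  (forall t, le t t) /\
  (forall s t, le s t -> le t s -> s = t) /\
  (forall r s t, le r s -> le s t -> le r t) /\
  (exists r, (forall s, le s r -> s = r) /\
             forall m, (forall s, le s m -> s = m) -> m = r) /\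
  (forall t, well_order_on (fun s => le s t) (tlt le)).

Definition rooted_subtree {T : Type} (le : T -> T -> Prop) (S : T -> Prop) : Prop :=
  forall s t, S t -> le s t -> S s.

Definition T_graph {T : Type} (le : T -> T -> Prop) (e : T -> T -> Prop) : Prop :=
  (forall s t, e s t -> le s t \/ le t s) /\
  (forall s t, tlt le s t -> exists u, le s u /\ tlt le u t /\ e u t).

(* vertex set of G(S) *)
Definition parts_union {T V : Type} (Vt : T -> V -> Prop) (S : T -> Prop) (x : V) : Prop :=
  exists t, S t /\ Vt t x.

Definition normal_semi_partition_tree {T V : Type} (adj : V -> V -> Prop)
  (le : T -> T -> Prop) (Vt : T -> V -> Prop) : Prop :=
  let inU := parts_union Vt (fun _ => True) in
  (forall t, exists x, Vt t x) /\
  (forall s t x, Vt s x -> Vt t x -> s = t) /\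
  (forall t, connected_in adj (Vt t)) /\
  T_graph le (fun s t => s <> t /\ exists x y, Vt s x /\ Vt t y /\ adj x y) /\
  (forall (x : V) (l : list V) (t t' : T),
      l <> [] -> NoDup (x :: l) ->
      walk (fun a b => adj a b /\ ~ (inU a /\ inU b)) x l ->
      Vt t x -> Vt t' (last l x) ->
      Forall (fun w => ~ inU w) (removelast l) ->
      le t t' \/ le t' t).

(* slim: |V_t| <= |height(t)| + aleph_0, where |height(t)| is the cardinality
   of the strict down-closure of t *)
Definition slim {T V : Type} (le : T -> T -> Prop) (Vt : T -> V -> Prop) : Prop :=
  forall t, card_le (Vt t)
    (fun z : T + nat => match z with inl s => tlt le s t | inr _ => True end).

Definition rooted_parts {T V : Type} (U : V -> Prop) (Vt : T -> V -> Prop) : Prop :=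
  forall t, exists x, Vt t x /\ U x.

Definition reach_avoiding {V : Type} (adj : V -> V -> Prop) (X : V -> Prop) (u z : V) : Prop :=
  exists l, walk adj u l /\ last l u = z /\ Forall (fun w => ~ X w) l.

Definition finite_adhesion_towards {V : Type} (adj : V -> V -> Prop)
  (X U : V -> Prop) : Prop :=
  forall u, U u -> ~ X u ->
    finite_set (fun y => X y /\ exists z, reach_avoiding adj X u z /\ adj z y).

Definition strictly_increasing {I K : Type} (ltI : I -> I -> Prop)
  (ltK : K -> K -> Prop) (f : I -> K) : Prop :=
  forall i j, ltI i j -> ltK (f i) (f j).

Definition cofinal_in {K : Type} (ltK : K -> K -> Prop) (C : K -> Prop) : Prop :=
  forall k, exists c, C c /\ (k = c \/ ltK k c).

Definition initial_ordinal_of {K X : Type} (ltK : K -> K -> Prop) (A : X -> Prop) : Prop :=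
  well_order_on (fun _ => True) ltK /\
  card_eq (fun _ : K => True) A /\
  forall k, card_lt (fun y => ltK y k) (fun _ : K => True).

(* (I, ltI) has order type cf(K): it is isomorphic to a cofinal subset of K
   (via a strictly increasing map with cofinal image) and its order type is at
   most that of every cofinal subset of K *)
Definition cofinality_order {I K : Type} (ltI : I -> I -> Prop)
  (ltK : K -> K -> Prop) : Prop :=
  well_order_on (fun _ => True) ltI /\
  (exists f : I -> K, strictly_increasing ltI ltK f /\
                      cofinal_in ltK (fun k => exists i, f i = k)) /\
  (forall C : K -> Prop, cofinal_in ltK C ->
     exists g : I -> K, strictly_increasing ltI ltK g /\ forall i, C (g i)).

Definition is_limit {I : Type} (ltI : I -> I -> Prop) (l : I) : Prop :=
  (exists i, ltI i l) /\ forall i, ltI i l -> exists j, ltI i j /\ ltI j l.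

(* Main.v *)
Require Import Defs.
From Stdlib Require Import List Arith Lia Classical ClassicalEpsilon FunctionalExtensionality PropExtensionality ProofIrrelevance Cantor.
From mathcomp Require boolp classical_sets wochoice.
Import ListNotations.

Lemma choice_on {X Y : Type} (A : X -> Prop) (R : X -> Y -> Prop) :
  inhabited Y -> (forall x, A x -> exists y, R x y) ->
  exists f : X -> Y, forall x, A x -> R x (f x).
Proof.
  intros [y0] H.
  assert (H' : forall x, exists y, A x -> R x y).
  { intro x. destruct (classic (A x)) as [Ax|nAx].
    - destruct (H x Ax) as [y Hy]. exists y. auto.
    - exists y0. intro; contradiction. }
  exists (fun x => proj1_sig (constructive_indefinite_description _ (H' x))).
  intros x Ax. exact (proj2_sig (constructive_indefinite_description _ (H' x)) Ax).
Qed.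

Lemma card_le_refl {X} (A : X -> Prop) : card_le A A.
Proof. exists (fun x => x). split; auto. Qed.

Lemma card_le_trans {X Y Z} (A : X->Prop) (B : Y->Prop) (C : Z->Prop) :
  card_le A B -> card_le B C -> card_le A C.
Proof.
  intros [f [Hf1 Hf2]] [g [Hg1 Hg2]]. exists (fun x => g (f x)). split; [now auto|].
  intros x y Ax Ay E. apply Hf2; [auto|auto|apply Hg2; auto].
Qed.

Lemma card_le_sub {X} (A B : X->Prop) : (forall x, A x -> B x) -> card_le A B.
Proof. intros H. exists (fun x => x). split; auto. Qed.

Lemma card_le_subl {X Y} (A A' : X->Prop) (B : Y -> Prop) :
  (forall x, A x -> A' x) -> card_le A' B -> card_le A B.
Proof. intros H [f [H1 H2]]. exists f. split; auto. Qed.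

Lemma card_le_subr {X Y} (A : X->Prop) (B B' : Y -> Prop) :
  (forall x, B x -> B' x) -> card_le A B -> card_le A B'.
Proof. intros H [f [H1 H2]]. exists f. split; auto. Qed.

Lemma countable_sub {X} (A B : X -> Prop) :
  (forall x, A x -> B x) -> countable_set B -> countable_set A.
Proof. intros H C. eapply card_le_subl; eauto. Qed.

Lemma countable_of_inj {X} (A : X -> Prop) (f : X -> nat) :
  (forall x y, A x -> A y -> f x = f y -> x = y) -> countable_set A.
Proof. intros H. exists f. split; auto. Qed.

Lemma tonat_inj2 a b c d : to_nat (a, b) = to_nat (c, d) -> a = c /\ b = d.
Proof.
  intros E. assert (E' : of_nat (to_nat (a,b)) = of_nat (to_nat (c,d))) by (rewrite E; auto).
  rewrite !cancel_of_to in E'. inversion E'. auto.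
Qed.

Fixpoint code_list (l : list nat) : nat :=
  match l with [] => 0 | a :: l' => S (to_nat (a, code_list l')) end.

Lemma code_list_inj l l' : code_list l = code_list l' -> l = l'.
Proof.
  revert l'; induction l as [|a l IH]; intros [|b l'] E; simpl in E; try discriminate; auto.
  injection E as E. apply tonat_inj2 in E as [E1 E2]. subst. f_equal. auto.
Qed.

Lemma countable_union {I X : Type} (D : I -> Prop) (F : I -> X -> Prop) :
  countable_set D -> (forall i, D i -> countable_set (F i)) ->
  countable_set (fun x => exists i, D i /\ F i x).
Proof.
  intros [g [_ Hg]] HF.
  destruct (classic (exists x, exists i, D i /\ F i x)) as [[x0 [i0 [Di0 Fi0]]]|Hn].
  2:{ exists (fun _ => 0). split; auto. intros x y Hx. exfalso; eauto. }
  destruct (choice_on D (fun i (h : X -> nat) => forall x y, F i x -> F i y -> h x = h y -> x = y))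
    as [H HH].
  { constructor. exact (fun _ => 0). }
  { intros i Di. destruct (HF i Di) as [h [_ Hh]]. exists h. auto. }
  destruct (choice_on (fun x => exists i, D i /\ F i x) (fun x i => D i /\ F i x)) as [idx Hidx].
  { constructor. exact i0. }
  { auto. }
  exists (fun x => to_nat (g (idx x), H (idx x) x)). split; [now auto|].
  intros x y Hx Hy E. apply tonat_inj2 in E as [E1 E2].
  destruct (Hidx x Hx) as [Dx Fx]. destruct (Hidx y Hy) as [Dy Fy].
  assert (Ei : idx x = idx y) by (apply Hg; auto).
  rewrite Ei in E2, Fx. apply (HH (idx y)); auto.
Qed.

Lemma countable_union2 {X} (A B : X -> Prop) :
  countable_set A -> countable_set B -> countable_set (fun x => A x \/ B x).
Proof.
  intros CA CB.
  apply countable_sub with (B := fun x => exists i : bool, (fun _ => True) i /\ (if i then A x else B x)).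
  { intros x [Ax|Bx]; [exists true|exists false]; auto. }
  apply countable_union.
  - exists (fun b : bool => if b then 1 else 0). split; auto. intros [|] [|] _ _ E; simpl in E; congruence.
  - intros [|] _; auto.
Qed.

Lemma countable_image {X Y} (f : X -> Y) (A : X -> Prop) :
  countable_set A -> countable_set (fun y => exists x, A x /\ f x = y).
Proof.
  intros [g [_ Hg]].
  destruct (classic (exists x, A x)) as [[x0 Ax0]|Hn].
  2:{ exists (fun _ => 0). split; auto. intros a b [x [Ax _]]. exfalso; eauto. }
  destruct (choice_on (fun y => exists x, A x /\ f x = y) (fun y x => A x /\ f x = y)) as [h Hh].
  { constructor; exact x0. }
  { auto. }
  exists (fun y => g (h y)). split; [now auto|].
  intros a b Ha Hb E. destruct (Hh a Ha) as [A1 E1]. destruct (Hh b Hb) as [A2 E2].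
  rewrite <- E1, <- E2. f_equal. apply Hg; auto.
Qed.

Lemma countable_nat (A : nat -> Prop) : countable_set A.
Proof. exists (fun n => n). split; auto. Qed.

Lemma finite_countable {X} (A : X -> Prop) : finite_set A -> countable_set A.
Proof.
  intros [l Hl].
  assert (H : forall x, A x -> exists n, nth_error l n = Some x).
  { intros x Ax. apply In_nth_error. auto. }
  destruct (choice_on A (fun x n => nth_error l n = Some x) (inhabits 0) H) as [f Hf].
  exists f. split; auto. intros x y Ax Ay E.
  pose proof (Hf x Ax) as E1. pose proof (Hf y Ay) as E2. rewrite E in E1. congruence.
Qed.

Lemma finite_sub {X} (A B : X -> Prop) : (forall x, A x -> B x) -> finite_set B -> finite_set A.
Proof. intros H [l Hl]. exists l. auto. Qed.

Lemma finite_union2 {X} (A B : X -> Prop) : finite_set A -> finite_set B -> finite_set (fun x => A x \/ B x).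
Proof. intros [l1 H1] [l2 H2]. exists (l1 ++ l2). intros x [Ax|Bx]; apply in_or_app; auto. Qed.

Lemma finite_list {X} (l : list X) : finite_set (fun x => In x l).
Proof. exists l. auto. Qed.

Lemma finite_empty {X} : finite_set (fun _ : X => False).
Proof. exists []. intros x []. Qed.

Lemma finite_image {X Y} (f : X -> Y) (A : X -> Prop) :
  finite_set A -> finite_set (fun y => exists x, A x /\ f x = y).
Proof. intros [l Hl]. exists (map f l). intros y [x [Ax E]]. subst. apply in_map. auto. Qed.

Lemma finite_inj_pre {X Y} (f : X -> Y) (A : X -> Prop) (B : Y -> Prop) :
  (forall x y, A x -> A y -> f x = f y -> x = y) -> (forall x, A x -> B (f x)) ->
  finite_set B -> finite_set A.
Proof.
  intros Hinj HB [l Hl].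
  assert (H : forall y, In y l -> exists ox : option X, forall x, A x -> f x = y -> ox = Some x).
  { intros y _. destruct (classic (exists x, A x /\ f x = y)) as [[x [Ax E]]|Hn].
    - exists (Some x). intros x' Ax' E'. f_equal. apply Hinj; auto. congruence.
    - exists None. intros x' Ax' E'. exfalso; eauto. }
  assert (H' : forall y, exists ox : option X, In y l -> forall x, A x -> f x = y -> ox = Some x).
  { intros y. destruct (classic (In y l)) as [i|n].
    - destruct (H y i) as [ox Hox]. exists ox. auto.
    - exists None. intros; contradiction. }
  destruct (choice _ H') as [g Hg].
  exists (flat_map (fun y => match g y with Some x => [x] | None => [] end) l).
  intros x Ax. apply in_flat_map. exists (f x). split; auto.
  rewrite (Hg (f x) (Hl _ (HB x Ax)) x Ax eq_refl). simpl; auto.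
Qed.

Lemma infinite_seq {X} (A : X -> Prop) : ~ finite_set A ->
  exists s : nat -> X, (forall n, A (s n)) /\ (forall n m, s n = s m -> n = m).
Proof.
  intros Hinf.
  assert (Hnext : forall l : list X, exists x, A x /\ ~ In x l).
  { intros l. apply NNPP. intro Hn. apply Hinf. exists l. intros x Ax.
    apply NNPP. intro Hx. apply Hn. exists x. auto. }
  destruct (choice _ Hnext) as [nx Hnx].
  set (L := fix L (n : nat) : list X := match n with 0 => [] | S k => nx (L k) :: L k end).
  exists (fun n => nx (L n)). split.
  - intro n. apply (Hnx (L n)).
  - assert (Hin : forall n m, n < m -> In (nx (L n)) (L m)).
    { intros n m Hnm. induction Hnm.
      + simpl. auto.
      + simpl. right. auto. }
    intros n m E. destruct (lt_eq_lt_dec n m) as [[lt|eq]|gt]; auto.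
    + exfalso. pose proof (Hin _ _ lt). rewrite E in H. apply (proj2 (Hnx (L m))). auto.
    + exfalso. pose proof (Hin _ _ gt). rewrite <- E in H. apply (proj2 (Hnx (L n))). auto.
Qed.

Lemma nat_le_infinite {X} (A : X -> Prop) : ~ finite_set A -> card_le (fun _ : nat => True) A.
Proof.
  intros H. destruct (infinite_seq A H) as [s [H1 H2]]. exists s. split; auto.
Qed.

Lemma countable_finite_or {X} (A : X -> Prop) : countable_set A -> ~ finite_set A ->
  card_le A (fun _ : nat => True) /\ card_le (fun _ : nat => True) A.
Proof. intros C F. split; auto. apply nat_le_infinite; auto. Qed.

Lemma nat_not_finite : ~ finite_set (fun _ : nat => True).
Proof.
  intros [l Hl]. set (m := S (list_sum l)).
  assert (forall x, In x l -> x <= list_sum l).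
  { clear Hl. induction l; simpl; intros x H; [contradiction|]. destruct H as [E|I]; [subst; lia|]. specialize (IHl x I). lia. }
  specialize (H m (Hl m I)). unfold m in H. lia.
Qed.

Lemma finite_card_le {X Y} (A : X -> Prop) (B : Y -> Prop) :
  card_le A B -> finite_set B -> finite_set A.
Proof. intros [f [H1 H2]] FB. eapply finite_inj_pre; eauto. Qed.

Lemma uncountable_not_finite {X} (A : X -> Prop) : ~ countable_set A -> ~ finite_set A.
Proof. intros H F. apply H. apply finite_countable. auto. Qed.

Lemma uncountable_minus {X} (A B : X -> Prop) :
  ~ countable_set A -> countable_set B -> ~ countable_set (fun x => A x /\ ~ B x).
Proof.
  intros HA HB HC. apply HA. apply countable_sub with (B := fun x => (A x /\ ~ B x) \/ B x).
  { intros x Ax. destruct (classic (B x)); auto. }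
  apply countable_union2; auto.
Qed.

Lemma uncountable_nonempty {X} (A : X -> Prop) : ~ countable_set A -> exists x, A x.
Proof.
  intros H. apply NNPP. intro Hn. apply H. exists (fun _ => 0). split; [now auto|].
  intros x y Ax. exfalso; eauto.
Qed.

Lemma zorn_sets {T} (P : (T -> Prop) -> Prop) :
  (forall F : (T->Prop) -> Prop, (forall Y, F Y -> P Y) ->
     (forall Y Z, F Y -> F Z -> (forall t, Y t -> Z t) \/ (forall t, Z t -> Y t)) ->
     P (fun t => exists Y, F Y /\ Y t)) ->
  exists A, P A /\ forall B, (forall t, A t -> B t) -> ~ (forall t, B t -> A t) -> ~ P B.
Proof.
  intros H.
  destruct (@classical_sets.Zorn_bigcup T P) as [A [PA HA]].
  - intros F HF Htot.
    assert (E : classical_sets.bigcup F (fun X => X) = (fun t => exists Y, F Y /\ Y t)).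
    { apply functional_extensionality; intro t. apply propositional_extensionality.
      split.
      - intros [Y FY Yt]. eauto.
      - intros [Y [FY Yt]]. exists Y; auto. }
    unfold classical_sets.bigcup in E |- *. rewrite E. apply H; auto.
  - exists A. split; auto. intros B H1 H2. apply HA. split; auto.
Qed.

Section Absorb.
Variable X : Type.
Variable A : X -> Prop.
Hypothesis Ainf : ~ finite_set A.

Definition good_fam (F : (nat -> X) -> Prop) : Prop :=
  (forall s, F s -> (forall n, A (s n)) /\ (forall n m, s n = s m -> n = m)) /\
  (forall s s' n m, F s -> F s' -> s n = s' m -> s = s').

Lemma absorb : card_le (fun p : X * nat => A (fst p)) A.
Proof.
  destruct (zorn_sets good_fam) as [F0 [[G1 G2] Fmax]].
  { intros F HF Htot. split.
    - intros s [Y [FY Ys]]. apply (proj1 (HF Y FY)). auto.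
    - intros s s' n m [Y [FY Ys]] [Z [FZ Zs']] E.
      destruct (Htot Y Z FY FZ) as [HYZ|HZY].
      + apply (proj2 (HF Z FZ)) with n m; auto.
      + apply (proj2 (HF Y FY)) with n m; auto. }
  set (inR := fun x => exists s n, F0 s /\ s n = x).
  assert (Rfin : finite_set (fun x => A x /\ ~ inR x)).
  { apply NNPP. intro Hinf. destruct (infinite_seq _ Hinf) as [s [Hs1 Hs2]].
    apply (Fmax (fun t => F0 t \/ t = s)).
    - auto.
    - intro Hsub. pose proof (Hsub s (or_intror eq_refl)) as Fs.
      apply (proj2 (Hs1 0)). exists s, 0. auto.
    - split.
      + intros t [Ft|Et]; [apply G1; auto|subst; split; auto; intro n; apply (proj1 (Hs1 n))].
      + intros t t' n m [Ft|Et] [Ft'|Et'] E.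
        * eapply G2; eauto.
        * subst t'. exfalso. apply (proj2 (Hs1 m)). exists t, n. auto.
        * subst t. exfalso. apply (proj2 (Hs1 n)). exists t', m. auto.
        * congruence. }
  destruct Rfin as [l Hl].
  assert (Hs0 : exists s0, F0 s0).
  { apply NNPP. intro Hn. apply Ainf. exists l. intros x Ax. apply Hl. split; auto.
    intros [s [n [Fs _]]]. apply Hn. eauto. }
  destruct Hs0 as [s0 Fs0].
  destruct (choice_on inR (fun x sn => F0 (fst sn) /\ fst sn (snd sn) = x)) as [sig Hsig].
  { constructor. exact (s0, 0). }
  { intros x [s [n [Fs E]]]. exists (s, n). auto. }
  destruct (choice_on (fun x => A x /\ ~ inR x) (fun x j => nth_error l j = Some x)) as [iota Hiota].
  { constructor. exact 0. }
  { intros x Hx. apply In_nth_error. auto. }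
  exists (fun p => if excluded_middle_informative (inR (fst p))
           then fst (sig (fst p)) (2 * to_nat (snd (sig (fst p)), snd p))
           else s0 (S (2 * to_nat (iota (fst p), snd p)))).
  split.
  - intros [x m] Ax. cbn [fst snd] in *. destruct (excluded_middle_informative (inR x)) as [i|n].
    + destruct (Hsig x i) as [Fs _]. apply (proj1 (G1 _ Fs)).
    + apply (proj1 (G1 _ Fs0)).
  - intros [x m] [y m'] Ax Ay. cbn [fst snd] in *.
    destruct (excluded_middle_informative (inR x)) as [ix|nx];
    destruct (excluded_middle_informative (inR y)) as [iy|ny]; intro E.
    + destruct (Hsig x ix) as [Fx Ex]. destruct (Hsig y iy) as [Fy Ey].
      pose proof (G2 _ _ _ _ Fx Fy E) as Es.
      rewrite Es in E. apply (proj2 (G1 _ Fy)) in E.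
      assert (E2 : to_nat (snd (sig x), m) = to_nat (snd (sig y), m')) by lia.
      destruct (tonat_inj2 _ _ _ _ E2) as [E3 E4]. subst m'. f_equal.
      rewrite <- Ex, <- Ey, Es, E3. auto.
    + exfalso. destruct (Hsig x ix) as [Fx Ex].
      pose proof (G2 _ _ _ _ Fx Fs0 E) as Es. rewrite Es in E.
      apply (proj2 (G1 _ Fs0)) in E. lia.
    + exfalso. destruct (Hsig y iy) as [Fy Ey].
      pose proof (G2 _ _ _ _ Fs0 Fy E) as Es. rewrite <- Es in E.
      apply (proj2 (G1 _ Fs0)) in E. lia.
    + apply (proj2 (G1 _ Fs0)) in E.
      assert (E2 : to_nat (iota x, m) = to_nat (iota y, m')) by lia.
      destruct (tonat_inj2 _ _ _ _ E2) as [E3 E4]. subst m'.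
      pose proof (Hiota x (conj Ax nx)) as H1. pose proof (Hiota y (conj Ay ny)) as H2.
      rewrite E3 in H1. congruence.
Qed.

End Absorb.

Lemma countable_times_list {Y} (Z : Y -> Prop) :
  countable_set Z -> countable_set (fun p : Y * list nat => Z (fst p)).
Proof.
  intros [g [_ Hg]]. exists (fun p => to_nat (g (fst p), code_list (snd p))). split; [now auto|].
  intros [y l] [y' l'] H1 H2 E. cbn [fst snd] in *. destruct (tonat_inj2 _ _ _ _ E) as [E1 E2].
  apply code_list_inj in E2. f_equal; auto.
Qed.

Lemma absorb_list {X Y} (W : X -> Prop) (Z B C : Y -> Prop) :
  ~ finite_set W -> (forall y, Z y -> B y \/ C y) -> countable_set B -> card_le C W ->
  card_le (fun p : Y * list nat => Z (fst p)) W.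
Proof.
  intros Winf HZ [gB [_ HgB]] [hC [HhC1 HhC2]].
  eapply card_le_trans; [|apply (absorb X W Winf)].
  destruct (infinite_seq W Winf) as [w [Hw _]].
  exists (fun p => if excluded_middle_informative (C (fst p))
          then (hC (fst p), 2 * code_list (snd p))
          else (w 0, S (2 * to_nat (gB (fst p), code_list (snd p))))).
  split.
  - intros [y l] Zy. simpl. destruct (excluded_middle_informative (C y)); simpl; auto.
  - intros [y l] [y' l'] Zy Zy'. cbn [fst snd] in *.
    destruct (excluded_middle_informative (C y)) as [cy|ny];
    destruct (excluded_middle_informative (C y')) as [cy'|ny']; intro E; pose proof (f_equal fst E) as E1; pose proof (f_equal snd E) as E2; cbn [fst snd] in E1, E2.
    + assert (code_list l = code_list l') by lia. apply code_list_inj in H. f_equal; auto.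
    + lia.
    + lia.
    + assert (E3 : to_nat (gB y, code_list l) = to_nat (gB y', code_list l')) by lia.
      destruct (tonat_inj2 _ _ _ _ E3) as [E4 E5]. apply code_list_inj in E5.
      assert (By : B y) by (destruct (HZ y Zy); tauto).
      assert (By' : B y') by (destruct (HZ y' Zy'); tauto).
      f_equal; auto.
Qed.

Module WOaux.
From mathcomp Require Import ssreflect ssrbool eqtype boolp wochoice.
Lemma WO_raw (X : Type) : exists R : X -> X -> Prop,
  forall S : X -> Prop, (exists x, S x) -> exists z, S z /\ (forall y, S y -> R z y) /\
     (forall z', S z' -> (forall y, S y -> R z' y) -> z' = z).
Proof.
have [R wR] := @well_ordering_principle {classic X}.
exists (fun x y => R x y) => S [x Sx].
have ne : nonempty (fun y : {classic X} => `[< S y >]) by exists x; apply/asboolP.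
case: (wR _ ne) => z [[Sz lb] U]. exists z; split; first by move/asboolP: Sz.
split. by move=> y Sy; apply: lb; rewrite unfold_in; apply/asboolP.
move=> z' Sz' lb'. symmetry. apply: U. split. by rewrite unfold_in; apply/asboolP.
move=> y; rewrite unfold_in => /asboolP Sy. by apply: lb'.
Qed.
End WOaux.

Lemma WO_exists (X : Type) : exists R : X -> X -> Prop, well_order_on (fun _ => True) R.
Proof.
  destruct (WOaux.WO_raw X) as [R HR].
  assert (tot : forall x y, R x y \/ R y x).
  { intros x y. destruct (HR (fun z => z = x \/ z = y)) as [z [[E|E] [H _]]]; eauto; subst.
    - left. apply H; auto.
    - right. apply H; auto. }
  assert (refl : forall x, R x x) by (intro x; destruct (tot x x); auto).
  assert (anti : forall x y, R x y -> R y x -> x = y).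
  { intros x y Rxy Ryx. destruct (HR (fun z => z = x \/ z = y)) as [z [_ [H U]]]; eauto.
    assert (x = z). { apply U; auto. intros w [E|E]; subst w; auto. }
    assert (y = z). { apply U; auto. intros w [E|E]; subst w; auto. }
    congruence. }
  assert (trans : forall x y z, R x y -> R y z -> R x z).
  { intros x y z Rxy Ryz. destruct (HR (fun w => w = x \/ w = y \/ w = z)) as [m [Sm [H _]]]; eauto.
    destruct Sm as [E|[E|E]]; subst m.
    - apply H; auto.
    - assert (x = y) by (apply anti; auto; apply H; auto). subst; auto.
    - assert (y = z) by (apply anti; auto; apply H; auto). subst; auto. }
  exists (fun x y => R x y /\ x <> y). split; [|split; [|split]].
  - intros x _ [_ N]. auto.
  - intros x y z _ _ _ [H1 N1] [H2 N2]. split; eauto. intro E; subst. apply N1. apply anti; auto.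
  - intros x y _ _. destruct (classic (x = y)) as [e|ne]; [left; exact e|]. right.
    destruct (tot x y); [left|right]; split; auto.
  - intros S _ Hne. destruct (HR S Hne) as [z [Sz [H _]]]. exists z. split; [exact Sz|].
    intros y Sy. destruct (classic (y = z)) as [e|ne]; [left; exact e|]. right. split; auto.
Qed.

Section WOfacts.
Variable K : Type.
Variable lt : K -> K -> Prop.
Hypothesis W : well_order_on (fun _ => True) lt.

Lemma wo_irr x : ~ lt x x.
Proof. destruct W as [H _]. apply H; auto. Qed.
Lemma wo_trans x y z : lt x y -> lt y z -> lt x z.
Proof. destruct W as [_ [H _]]. intros; eapply H; eauto. Qed.
Lemma wo_tot x y : x = y \/ lt x y \/ lt y x.
Proof. destruct W as [_ [_ [H _]]]. apply H; auto. Qed.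
Lemma wo_min (S : K -> Prop) : (exists x, S x) -> exists m, S m /\ forall y, S y -> y = m \/ lt m y.
Proof. destruct W as [_ [_ [_ H]]]. intros; apply H; auto. Qed.
Lemma wo_asym x y : lt x y -> ~ lt y x.
Proof. intros H1 H2. apply (wo_irr x). eapply wo_trans; eauto. Qed.
Lemma wo_min_not_lt (S : K -> Prop) m : S m -> (forall y, S y -> y = m \/ lt m y) ->
  forall y, lt y m -> ~ S y.
Proof. intros Sm H y Hy Sy. destruct (H y Sy) as [E|E]. subst. eapply wo_irr; eauto. eapply wo_asym; eauto. Qed.
Lemma wo_wf : well_founded lt.
Proof.
  intro x. apply NNPP. intro Hn.
  destruct (wo_min (fun y => ~ Acc lt y)) as [m [Hm Hmin]]; eauto.
  apply Hm. constructor. intros y Hy. apply NNPP. intro Hy'.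
  destruct (Hmin y Hy') as [E|E]; subst. eapply wo_irr; eauto. eapply wo_asym; eauto.
Qed.
Lemma wo_not_lt_le x y : ~ lt x y -> x = y \/ lt y x.
Proof. intros H. destruct (wo_tot x y) as [E|[E|E]]; auto. contradiction. Qed.
End WOfacts.

Lemma wo_sub {K} (lt : K -> K -> Prop) (P : K -> Prop) :
  well_order_on (fun _ => True) lt ->
  well_order_on (fun _ : {x | P x} => True) (fun a b => lt (proj1_sig a) (proj1_sig b)).
Proof.
  intros W. split; [|split; [|split]].
  - intros x _. apply wo_irr with (1 := W).
  - intros x y z _ _ _. apply wo_trans with (1 := W).
  - intros [x px] [y py] _ _. simpl. destruct (wo_tot _ _ W x y) as [E|[E|E]]; auto.
    left. subst. f_equal. apply proof_irrelevance.
  - intros S _ [x0 Sx0]. destruct (wo_min _ _ W (fun k => exists pk, S (exist _ k pk))) as [m [[pm Sm] Hm]].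
    { exists (proj1_sig x0), (proj2_sig x0). destruct x0; auto. }
    exists (exist _ m pm). split; auto. intros [y py] Sy. simpl.
    destruct (Hm y (ex_intro _ py Sy)) as [E|E]; auto. left. subst. f_equal. apply proof_irrelevance.
Qed.

Lemma sig_inj {K} (P : K -> Prop) (a b : {x | P x}) : proj1_sig a = proj1_sig b -> a = b.
Proof. destruct a, b; simpl; intros; subst; f_equal; apply proof_irrelevance. Qed.

Lemma initial_exists (T : Type) : exists (K : Type) (ltK : K -> K -> Prop),
  initial_ordinal_of ltK (fun _ : T => True).
Proof.
  destruct (WO_exists T) as [W HW].
  destruct (classic (exists t, card_le (fun _ : T => True) (fun s => W s t))) as [Hex|Hno].
  - destruct (wo_min _ _ HW _ Hex) as [t0 [Ht0 Hmin]].
    exists {s : T | W s t0}, (fun a b => W (proj1_sig a) (proj1_sig b)).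
    split; [|split].
    + apply wo_sub; auto.
    + split.
      * exists (@proj1_sig _ _). split; auto. intros; apply sig_inj; auto.
      * destruct Ht0 as [f [Hf1 Hf2]]. exists (fun x => exist _ (f x) (Hf1 x I)). split; auto.
        intros x y _ _ E. apply Hf2; auto. apply (f_equal (@proj1_sig _ _)) in E. exact E.
    + intros k. split.
      * exists (fun x => x). split; auto.
      * intro Hle. destruct k as [k pk]. simpl in Hle.
        assert (H : card_le (fun _ : T => True) (fun s => W s k)).
        { apply card_le_trans with (B := fun _ : {s | W s t0} => True).
          - destruct Ht0 as [f [Hf1 Hf2]]. exists (fun x => exist (fun s => W s t0) (f x) (Hf1 x I)).
            split; [exact (fun _ _ => I)|]. intros x y _ _ E. apply Hf2; auto.
            apply (f_equal (@proj1_sig _ _)) in E. exact E.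
          - eapply card_le_trans; [exact Hle|].
            exists (@proj1_sig _ _). split.
            + intros [x px] Hx. exact Hx.
            + intros; apply sig_inj; auto. }
        apply (wo_min_not_lt _ _ HW _ _ Ht0 Hmin k pk H).
  - exists T, W. split; [|split].
    + auto.
    + split; apply card_le_refl.
    + intros k. split.
      * exists (fun x => x). split; auto.
      * intro H. apply Hno. exists k. exact H.
Qed.

Lemma wf_recursion {K Y} (lt : K -> K -> Prop) (wf : well_founded lt) (y0 : Y)
  (F : K -> (K -> Y) -> Y) :
  (forall k g g', (forall j, lt j k -> g j = g' j) -> F k g = F k g') ->
  exists g : K -> Y, forall k, g k = F k g.
Proof.
  intros Floc.
  set (F' := fun k (h : forall j, lt j k -> Y) =>
         F k (fun j => match excluded_middle_informative (lt j k) with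
                       | left H => h j H | right _ => y0 end)).
  set (g := Fix wf (fun _ => Y) F').
  exists g. intro k. unfold g. rewrite Fix_eq.
  - unfold F'. apply Floc. intros j Hj. destruct (excluded_middle_informative (lt j k)); [auto|contradiction].
  - intros x f f' Hff. unfold F'. f_equal. apply functional_extensionality. intro j.
    destruct (excluded_middle_informative (lt j x)); auto.
Qed.

Definition pick {K} (P : K -> Prop) (d : K) : K :=
  match excluded_middle_informative (exists c, P c) with
  | left H => proj1_sig (constructive_indefinite_description _ H)
  | right _ => d end.

Lemma pick_spec {K} (P : K -> Prop) d : (exists c, P c) -> P (pick P d).
Proof.
  intros H. unfold pick. destruct (excluded_middle_informative (exists c, P c)) as [H'|H'].
  - exact (proj2_sig (constructive_indefinite_description _ H')).
  - contradiction.
Qed.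

Section Cof.
Variable K : Type.
Variable lt : K -> K -> Prop.
Hypothesis W : well_order_on (fun _ => True) lt.

Definition Qcof (i : K) : Prop :=
  exists h : K -> K, (forall j j', lt j j' -> lt j' i -> lt (h j) (h j')) /\
                     (forall k, exists j, lt j i /\ (k = h j \/ lt k (h j))).

Lemma cof_rec (D : K -> Prop) (y0 : K) :
  (forall i j, D i -> lt j i -> D j) -> (forall i, D i -> ~ Qcof i) ->
  forall C, cofinal_in lt C ->
  exists g : K -> K, (forall j j', lt j j' -> D j' -> lt (g j) (g j')) /\ (forall j, D j -> C (g j)).
Proof.
  intros Ddown NoQ C HC.
  set (P := fun (k : K) (g : K -> K) (c : K) => C c /\ forall j, lt j k -> lt (g j) c).
  destruct (wf_recursion lt (wo_wf _ _ W) y0 (fun k g => pick (P k g) k)) as [g Hg].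
  { intros k g g' Hgg. f_equal. apply functional_extensionality; intro c.
    apply propositional_extensionality. unfold P. split; intros [Cc H]; split; auto;
    intros j Hj; [rewrite <- Hgg|rewrite Hgg]; auto. }
  assert (Hind : forall k, D k -> P k g (g k)).
  { intro k. induction (wo_wf _ _ W k) as [k _ IH]. intros Dk.
    rewrite Hg. apply pick_spec.
    destruct (classic (Qcof k)) as [Q|nQ]; [exfalso; exact (NoQ k Dk Q)|].
    assert (Hinc : forall j j', lt j j' -> lt j' k -> lt (g j) (g j')).
    { intros j j' Hjj' Hj'. apply (IH j' Hj' (Ddown _ _ Dk Hj')). auto. }
    assert (Hb : exists k', forall j, lt j k -> lt (g j) k').
    { apply NNPP. intro Hn. apply nQ. exists g. split; auto.
      intro k'. apply NNPP. intro Hn2. apply Hn. exists k'. intros j Hj.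
      destruct (wo_tot _ _ W (g j) k') as [E|[E|E]]; auto.
      - exfalso. apply Hn2. exists j. auto.
      - exfalso. apply Hn2. exists j. auto. }
    destruct Hb as [k' Hk']. destruct (HC k') as [c [Cc Hc]].
    exists c. split; auto. intros j Hj. destruct Hc as [E|E]; subst; auto.
    eapply wo_trans; eauto. }
  exists g. split.
  - intros j j' Hjj' Dj'. apply (proj2 (Hind j' Dj')). auto.
  - intros j Dj. apply (Hind j Dj).
Qed.

Lemma cof_exists (y0 : K) : exists (I : Type) (ltI : I -> I -> Prop), cofinality_order ltI lt.
Proof.
  destruct (classic (exists i, Qcof i)) as [HQ|HnQ].
  - destruct (wo_min _ _ W _ HQ) as [k0 [Qk0 Hmin]].
    exists {j | lt j k0}, (fun a b => lt (proj1_sig a) (proj1_sig b)).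
    split; [apply wo_sub; auto|split].
    + destruct Qk0 as [h [Hh1 Hh2]]. exists (fun a => h (proj1_sig a)). split.
      * intros [a pa] [b pb] Hab. simpl in *. apply Hh1; auto.
      * intro k. destruct (Hh2 k) as [j [Hj E]]. exists (h j). split; auto. exists (exist _ j Hj). auto.
    + intros C HC. destruct (cof_rec (fun j => lt j k0) y0) with (C := C) as [g [Hg1 Hg2]]; auto.
      * intros i j Hi Hj. eapply wo_trans; eauto.
      * intros i Hi Qi. exact (wo_min_not_lt _ _ W _ _ Qk0 Hmin i Hi Qi).
      * exists (fun a => g (proj1_sig a)). split.
        -- intros [a pa] [b pb] Hab. simpl in *. apply Hg1; auto.
        -- intros [a pa]. simpl. auto.
  - exists K, lt. split; [auto|split].
    + exists (fun k => k). split; [intros i j H; exact H|]. intro k. exists k. split; eauto.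
    + intros C HC. destruct (cof_rec (fun _ => True) y0) with (C := C) as [g [Hg1 Hg2]]; auto.
      * intros i _ Qi. apply HnQ. eauto.
      * exists g. split; auto. intros i j Hij. apply Hg1; auto.
Qed.
End Cof.

Lemma last_cons_ne {V} (a x : V) l : last (a :: l) x = last l a.
Proof.
  revert a x; induction l as [|b l IH]; intros a x; [reflexivity|].
  change (last (b :: l) x = last (b :: l) a). rewrite !IH. reflexivity.
Qed.
Lemma walk_app {V} (R : V -> V -> Prop) x l1 l2 :
  walk R x (l1 ++ l2) <-> walk R x l1 /\ walk R (last l1 x) l2.
Proof.
  revert x; induction l1 as [|a l1 IH]; intros x.
  - simpl. split; [intros H; split; auto|intros [_ H]; auto].
  - rewrite last_cons_ne. simpl. rewrite IH. tauto.
Qed.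

Lemma last_app_cons {V} (l1 l2 : list V) (w x : V) : last (l1 ++ w :: l2) x = last l2 w.
Proof.
  revert x; induction l1 as [|a l1 IH]; intros x.
  - apply last_cons_ne.
  - change (last (a :: (l1 ++ w :: l2)) x = last l2 w). rewrite last_cons_ne. apply IH.
Qed.

Lemma last_app {V} (l1 l2 : list V) x : last (l1 ++ l2) x = last l2 (last l1 x).
Proof.
  revert x; induction l1 as [|a l1 IH]; intros x; [reflexivity|].
  change (last (a :: (l1 ++ l2)) x = last l2 (last (a :: l1) x)). rewrite !last_cons_ne. apply IH.
Qed.

Lemma walk_mono {V} (R R' : V -> V -> Prop) x l :
  (forall a b, R a b -> R' a b) -> walk R x l -> walk R' x l.
Proof. revert x; induction l; simpl; intros x H W; auto. destruct W; split; auto. Qed.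

Lemma walk_and {V} (R : V -> V -> Prop) (P : V -> V -> Prop) x l :
  walk R x l -> (forall a b, R a b -> P a b) -> walk (fun a b => R a b /\ P a b) x l.
Proof. revert x; induction l; simpl; intros x W H; auto. destruct W; split; auto. Qed.

Lemma last_in {V} (l : list V) x : l <> [] -> In (last l x) l.
Proof.
  revert x; induction l as [|a l IH]; intros x H; [contradiction|].
  rewrite last_cons_ne. destruct l as [|b l]; simpl; auto.
  right. apply (IH a). discriminate.
Qed.

Lemma last_in_or {V} (l : list V) x : last l x = x \/ In (last l x) l.
Proof. destruct l. left; auto. right. apply last_in. discriminate. Qed.

Lemma walk_shorten {V} (R : V -> V -> Prop) x l : walk R x l ->
  exists l', walk R x l' /\ last l' x = last l x /\ NoDup (x :: l') /\ incl l' l.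
Proof.
  revert x; induction l as [|y l IH]; intros x W.
  - exists []. repeat split; auto. constructor; auto. constructor. intros a [].
  - destruct W as [Rxy W]. destruct (IH y W) as [l1 [W1 [E1 [N1 I1]]]].
    rewrite last_cons_ne.
    destruct (classic (In x (y :: l1))) as [Hin|Hnin].
    + destruct Hin as [E|Hin].
      * subst y. exists l1. repeat split; auto. intros a Ha. right. auto.
      * apply in_split in Hin as [p [q E]]. subst l1.
        exists q. split; [|split; [|split]].
        -- apply walk_app in W1 as [_ W2]. simpl in W2. destruct W2 as [_ W2].
           rewrite last_app_cons in E1. exact W2.
        -- rewrite last_app_cons in E1. auto.
        -- inversion N1 as [|? ? N2 N3]. apply NoDup_remove_2 in N3 as N4.
           constructor.
           ++ intro Hq. apply N4. apply in_or_app. right. auto.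
           ++ apply NoDup_remove_1 in N3. apply NoDup_app_remove_l in N3. auto.
        -- intros a Ha. right. apply I1. apply in_or_app. right. right. auto.
    + exists (y :: l1). split; [|split; [|split]].
      * split; auto.
      * rewrite last_cons_ne. auto.
      * constructor; auto.
      * intros a [Ha|Ha]; [left; auto|right; auto].
Qed.

Lemma split_first {V} (P : V -> Prop) (l : list V) :
  Forall (fun v => ~ P v) l \/
  exists l1 w l2, l = l1 ++ w :: l2 /\ Forall (fun v => ~ P v) l1 /\ P w.
Proof.
  induction l as [|a l IH]; [left; constructor|].
  destruct (classic (P a)) as [Pa|nPa].
  - right. exists [], a, l. repeat split; auto.
  - destruct IH as [H|[l1 [w [l2 [E [F Pw]]]]]].
    + left. constructor; auto.
    + right. exists (a :: l1), w, l2. subst. repeat split; auto.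
Qed.

Lemma split_last {V} (P : V -> Prop) (l : list V) : (exists v, In v l /\ P v) ->
  exists l1 w l2, l = l1 ++ w :: l2 /\ Forall (fun v => ~ P v) l2 /\ P w.
Proof.
  induction l as [|a l IH]; intros [v [Hv Pv]]; [destruct Hv|].
  destruct (classic (exists v, In v l /\ P v)) as [Hex|Hno].
  - destruct (IH Hex) as [l1 [w [l2 [E [F Pw]]]]]. exists (a :: l1), w, l2. subst. auto.
  - exists [], a, l. split; auto. split.
    + apply Forall_forall. intros x Hx Px. apply Hno. eauto.
    + destruct Hv as [E|Hv]; [subst; auto|exfalso; apply Hno; eauto].
Qed.

Lemma reach_refl {V} (adj : V -> V -> Prop) X u : reach_avoiding adj X u u.
Proof. exists []. simpl. repeat split; auto. Qed.

Lemma reach_trans {V} (adj : V -> V -> Prop) X a b c :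
  reach_avoiding adj X a b -> reach_avoiding adj X b c -> reach_avoiding adj X a c.
Proof.
  intros [l1 [W1 [E1 F1]]] [l2 [W2 [E2 F2]]]. exists (l1 ++ l2).
  split; [|split].
  - apply walk_app. split; auto. rewrite E1. auto.
  - rewrite last_app. rewrite E1. auto.
  - apply Forall_app. auto.
Qed.

Lemma reach_step {V} (adj : V -> V -> Prop) X a b c :
  reach_avoiding adj X a b -> adj b c -> ~ X c -> reach_avoiding adj X a c.
Proof.
  intros H Hbc Hc. apply reach_trans with b; auto. exists [c]. simpl. repeat split; auto.
Qed.

Lemma reach_mono {V} (adj : V -> V -> Prop) (X Y : V -> Prop) a b :
  (forall v, Y v -> X v) -> reach_avoiding adj X a b -> reach_avoiding adj Y a b.
Proof.
  intros H [l [W [E F]]]. exists l. repeat split; auto.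
  eapply Forall_impl; [|exact F]. simpl. intros v Hv Yv. apply Hv. auto.
Qed.

Lemma reach_in {V} (adj : V -> V -> Prop) (X P : V -> Prop) a b :
  (forall v, P v -> ~ X v) ->
  (exists l, walk adj a l /\ last l a = b /\ Forall P l) -> reach_avoiding adj X a b.
Proof.
  intros H [l [W [E F]]]. exists l. repeat split; auto.
  eapply Forall_impl; [|exact F]. auto.
Qed.

Lemma reach_prefix {V} (adj : V -> V -> Prop) X u l :
  walk adj u l -> Forall (fun w => ~ X w) l -> forall v, In v l -> reach_avoiding adj X u v.
Proof.
  intros W F v Hv. apply in_split in Hv as [p [q E]]. subst.
  exists (p ++ [v]). split; [|split].
  - apply walk_app in W as [W1 W2]. apply walk_app. split; auto. simpl in *. tauto.
  - rewrite last_app. auto.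
  - apply Forall_app in F as [F1 F2]. apply Forall_app. split; auto. inversion F2; auto.
Qed.

Lemma walk_rev {V} (R : V -> V -> Prop) (Rsym : forall a b, R a b -> R b a) x l :
  walk R x l -> exists l', walk R (last l x) l' /\ last l' (last l x) = x /\
     (forall v, In v l' -> v = x \/ In v l).
Proof.
  revert x; induction l as [|y l IH]; intros x W.
  - exists []. simpl. split; [exact I|split; [reflexivity|intros v []]].
  - destruct W as [Rxy W]. destruct (IH y W) as [l' [W' [E' I']]].
    rewrite last_cons_ne. exists (l' ++ [x]). split; [|split].
    + apply walk_app. split; auto. rewrite E'. simpl. split; auto.
    + rewrite last_app. auto.
    + intros v Hv. apply in_app_or in Hv as [Hv|[Hv|[]]]; auto.
      destruct (I' v Hv) as [E|E]; subst; right; simpl; auto.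
Qed.

Lemma reach_sym {V} (adj : V -> V -> Prop) (adjsym : forall a b, adj a b -> adj b a) X a b :
  ~ X a -> reach_avoiding adj X a b -> reach_avoiding adj X b a.
Proof.
  intros Ha [l [W [E F]]]. destruct (walk_rev adj adjsym a l W) as [l' [W' [E' I']]].
  exists l'. rewrite E in W', E'. repeat split; auto.
  apply Forall_forall. intros v Hv. destruct (I' v Hv) as [Ev|Ev]; [subst; auto|].
  rewrite Forall_forall in F. auto.
Qed.

Lemma connected_star {V} (adj : V -> V -> Prop) (adjsym : forall a b, adj a b -> adj b a)
  (Z : V -> Prop) (c : V) : Z c ->
  (forall v, Z v -> exists l, walk adj c l /\ last l c = v /\ Forall Z l) ->
  connected_in adj Z.
Proof.
  intros Zc H x y Zx Zy.
  destruct (H x Zx) as [l1 [W1 [E1 F1]]]. destruct (H y Zy) as [l2 [W2 [E2 F2]]].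
  destruct (walk_rev adj adjsym c l1 W1) as [l1' [W1' [E1' I1']]].
  exists (l1' ++ l2). rewrite E1 in W1', E1'. split; [|split].
  - apply walk_app. split; auto. rewrite E1'. auto.
  - rewrite last_app. rewrite E1'. auto.
  - apply Forall_app. split; auto. apply Forall_forall. intros v Hv.
    destruct (I1' v Hv) as [Ev|Ev]; [subst; auto|]. rewrite Forall_forall in F1. auto.
Qed.

Section Tree.
Variable T : Type.
Variable le : T -> T -> Prop.
Hypothesis Htree : order_tree le.

Notation lt := (tlt le).

Lemma tle_refl t : le t t.
Proof. apply Htree. Qed.
Lemma tle_antisym s t : le s t -> le t s -> s = t.
Proof. apply Htree. Qed.
Lemma tle_trans r s t : le r s -> le s t -> le r t.
Proof. apply Htree. Qed.
Lemma down_wo t : well_order_on (fun s => le s t) lt.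
Proof. apply Htree. Qed.

Lemma tlt_le s t : lt s t -> le s t.
Proof. intros [H _]; auto. Qed.
Lemma tlt_irr t : ~ lt t t.
Proof. intros [_ H]; auto. Qed.
Lemma tlt_le_trans r s t : lt r s -> le s t -> lt r t.
Proof.
  intros [H1 N] H2. split; [eapply tle_trans; eauto|]. intro E; subst. apply N. apply tle_antisym; auto.
Qed.
Lemma tle_lt_trans r s t : le r s -> lt s t -> lt r t.
Proof.
  intros H1 [H2 N]. split; [eapply tle_trans; eauto|]. intro E; subst. apply N. apply tle_antisym; auto.
Qed.
Lemma tlt_trans r s t : lt r s -> lt s t -> lt r t.
Proof. intros H1 H2. eapply tlt_le_trans; eauto. apply tlt_le; auto. Qed.
Lemma tlt_asym s t : lt s t -> ~ lt t s.
Proof. intros H1 H2. apply (tlt_irr s). eapply tlt_trans; eauto. Qed.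
Lemma tlt_not_le s t : lt s t -> ~ le t s.
Proof. intros [H N] H2. apply N. apply tle_antisym; auto. Qed.

Lemma tle_cases s t : le s t -> s = t \/ lt s t.
Proof. intros H. destruct (classic (s = t)); auto. right; split; auto. Qed.

Lemma comparable_below a b c : le a c -> le b c -> le a b \/ le b a.
Proof.
  intros Ha Hb. destruct (down_wo c) as [_ [_ [Htot _]]].
  destruct (Htot a b Ha Hb) as [E|[E|E]]; [subst; left; apply tle_refl|left; apply tlt_le; auto|right; apply tlt_le; auto].
Qed.

Lemma tlt_wf : well_founded lt.
Proof.
  intro x. apply NNPP. intro Hn.
  destruct (down_wo x) as [_ [_ [_ Hmin]]].
  destruct (Hmin (fun y => le y x /\ ~ Acc lt y)) as [m [[Hm1 Hm2] Hmm]]; [tauto|exists x; split; auto; apply tle_refl|].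
  apply Hm2. constructor. intros y Hy. apply NNPP. intro Hy'.
  destruct (Hmm y) as [E|E].
  - split; auto. apply tle_trans with m; auto. apply tlt_le; auto.
  - subst. eapply tlt_irr; eauto.
  - eapply tlt_asym; eauto.
Qed.

Lemma root_le : exists r, forall t, le r t.
Proof.
  destruct Htree as [_ [_ [_ [[r [Hr1 Hr2]] _]]]].
  exists r. intro t. destruct (down_wo t) as [_ [_ [_ Hmin]]].
  destruct (Hmin (fun s => le s t)) as [m [Hm Hmm]]; [tauto|exists t; apply tle_refl|].
  assert (E : m = r).
  { apply Hr2. intros s Hs. assert (le s t) by (eapply tle_trans; eauto).
    destruct (Hmm s H) as [E|E]; auto. exfalso. apply (tlt_not_le m s); auto. }
  subst. auto.
Qed.

Lemma min_outside (S : T -> Prop) a : rooted_subtree le S -> ~ S a ->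
  exists t0, le t0 a /\ ~ S t0 /\ forall s, lt s t0 -> S s.
Proof.
  intros HS Ha. destruct (down_wo a) as [_ [_ [_ Hmin]]].
  destruct (Hmin (fun s => le s a /\ ~ S s)) as [m [[Hm1 Hm2] Hmm]]; [tauto|exists a; split; auto; apply tle_refl|].
  exists m. repeat split; auto. intros s Hs. apply NNPP. intro Ns.
  assert (le s a) by (apply tle_trans with m; auto; apply tlt_le; auto).
  destruct (Hmm s (conj H Ns)) as [E|E].
  - subst. eapply tlt_irr; eauto.
  - eapply tlt_asym; eauto.
Qed.

Lemma above_min (S : T -> Prop) t0 a b : rooted_subtree le S -> ~ S b ->
  (forall s, lt s t0 -> S s) -> le t0 a -> (le a b \/ le b a) -> le t0 b.
Proof.
  intros HS Hb Hdown Ha [H|H].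
  - eapply tle_trans; eauto.
  - destruct (comparable_below t0 b a Ha H) as [E|E]; auto.
    destruct (tle_cases _ _ E) as [E'|E']; [subst; apply tle_refl|].
    exfalso. apply Hb. apply Hdown; auto.
Qed.

End Tree.

Lemma walk_outside_pairs {V} (adj : V -> V -> Prop) (P : V -> Prop) x l1 w :
  walk adj x (l1 ++ [w]) -> Forall P l1 -> l1 <> [] ->
  walk (fun a b => adj a b /\ (P a \/ P b)) x (l1 ++ [w]).
Proof.
  revert x; induction l1 as [|a l1 IH]; intros x W F N; [contradiction|].
  inversion F as [|? ? Pa F']; subst.
  destruct W as [Hxa W]. split; [split; auto|].
  destruct l1 as [|b l1].
  - simpl in *. destruct W as [Haw _]. split; auto.
  - apply IH; auto. discriminate.
Qed.

Lemma in_removelast_in {A} (l : list A) v : In v (removelast l) -> In v l.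
Proof.
  induction l as [|a l IH]; simpl; auto. destruct l as [|b l]; simpl; [intros []|].
  intros [E|H]; auto. right. apply IH. exact H.
Qed.

Section Graph.
Variables (V : Type) (adj : V -> V -> Prop) (U : V -> Prop) (T : Type) (le : T -> T -> Prop) (Vt : T -> V -> Prop).
Hypothesis Hsimple : simple_graph adj.
Hypothesis Htree : order_tree le.
Hypothesis Hnpt : normal_semi_partition_tree adj le Vt.
Hypothesis Hslim : slim le Vt.
Hypothesis Hroot : rooted_parts U Vt.

Notation lt := (tlt le).
Notation inU := (parts_union Vt (fun _ => True)).
Notation G := (parts_union Vt).

Lemma Trefl t : le t t. Proof. apply tle_refl; auto. Qed.
Lemma Ttrans r s t : le r s -> le s t -> le r t. Proof. apply tle_trans; auto. Qed.
Lemma Tantisym s t : le s t -> le t s -> s = t. Proof. apply tle_antisym; auto. Qed.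
Lemma Tltle s t : lt s t -> le s t. Proof. apply tlt_le. Qed.
Lemma Tirr t : ~ lt t t. Proof. apply tlt_irr. Qed.
Lemma Tltt r s t : lt r s -> lt s t -> lt r t. Proof. apply tlt_trans; auto. Qed.
Lemma Tltle_t r s t : lt r s -> le s t -> lt r t. Proof. apply tlt_le_trans; auto. Qed.
Lemma Tlelt_t r s t : le r s -> lt s t -> lt r t. Proof. apply tle_lt_trans; auto. Qed.
Lemma Tasym s t : lt s t -> ~ lt t s. Proof. apply tlt_asym; auto. Qed.
Lemma Tnle s t : lt s t -> ~ le t s. Proof. apply tlt_not_le; auto. Qed.
Lemma Tcases s t : le s t -> s = t \/ lt s t. Proof. apply tle_cases. Qed.
Lemma Tcomp a b c : le a c -> le b c -> le a b \/ le b a. Proof. apply comparable_below; auto. Qed.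
Lemma Twf : well_founded lt. Proof. apply tlt_wf; auto. Qed.

Lemma adj_sym a b : adj a b -> adj b a.
Proof. apply Hsimple. Qed.

Lemma part_ne t : exists x, Vt t x.
Proof. destruct Hnpt as [H _]. auto. Qed.
Lemma part_disj s t x : Vt s x -> Vt t x -> s = t.
Proof. destruct Hnpt as [_ [H _]]. eauto. Qed.
Lemma part_conn t : connected_in adj (Vt t).
Proof. destruct Hnpt as [_ [_ [H _]]]. auto. Qed.
Lemma tg_comp s t x y : s <> t -> Vt s x -> Vt t y -> adj x y -> le s t \/ le t s.
Proof. destruct Hnpt as [_ [_ [_ [[H _] _]]]]. intros; apply H. split; eauto. Qed.
Lemma tg_cof s t : lt s t -> exists u, le s u /\ lt u t /\ exists x y, Vt u x /\ Vt t y /\ adj x y.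
Proof.
  destruct Hnpt as [_ [_ [_ [[_ H] _]]]]. intros Hst. destruct (H s t Hst) as [u [H1 [H2 [_ H3]]]].
  exists u. auto.
Qed.
Lemma npath (x : V) (l : list V) (t t' : T) :
  l <> [] -> NoDup (x :: l) ->
  walk (fun a b => adj a b /\ ~ (inU a /\ inU b)) x l ->
  Vt t x -> Vt t' (last l x) -> Forall (fun w => ~ inU w) (removelast l) -> le t t' \/ le t' t.
Proof. destruct Hnpt as [_ [_ [_ [_ H]]]]. apply H. Qed.

Lemma Vt_inj s t : (forall x, Vt s x <-> Vt t x) -> s = t.
Proof. intros H. destruct (part_ne s) as [x Hx]. apply (part_disj s t x); auto. apply H; auto. Qed.

Lemma Vt_inj_eq s t : Vt s = Vt t -> s = t.
Proof. intros E. apply Vt_inj. intro x. rewrite E. tauto. Qed.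

Lemma inU_of t x : Vt t x -> inU x.
Proof. intros H. exists t. auto. Qed.

Lemma CL c b x w l1 : Vt c x -> Vt b w -> walk adj x (l1 ++ [w]) ->
  Forall (fun v => ~ inU v) l1 -> le c b \/ le b c.
Proof.
  intros Hx Hw W F.
  destruct (classic (c = b)) as [E|Ncb]; [subst; left; apply tle_refl; auto|].
  destruct (classic (l1 = [])) as [E|Nl].
  - subst. simpl in W. destruct W as [Hxw _]. eapply tg_comp; eauto.
  - destruct (classic (x = w)) as [E|Nxw].
    { subst. exfalso. apply Ncb. eapply part_disj; eauto. }
    pose proof (walk_outside_pairs adj _ x l1 w W F Nl) as W2.
    apply walk_mono with (R' := fun a b => adj a b /\ ~ (inU a /\ inU b)) in W2.
    2:{ intros a0 b0 [H1 [H2|H2]]; split; auto; tauto. }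
    destruct (walk_shorten _ x _ W2) as [l' [W' [E' [N' I']]]].
    rewrite last_app in E'. simpl in E'.
    assert (Nl' : l' <> []). { intro H0; rewrite H0 in E'; simpl in E'; auto. }
    apply (npath x l' c b Nl' N' W' Hx); [rewrite E'; auto|].
    apply Forall_forall. intros v Hv.
    assert (Hl' : l' = removelast l' ++ [last l' x]) by (apply app_removelast_last; auto).
    assert (Nw : v <> w).
    { intro; subst v. rewrite E' in Hl'. rewrite Hl' in N'.
      inversion N' as [|? ? _ N'']. apply NoDup_remove_2 in N''. apply N''.
      rewrite app_nil_r. auto. }
    assert (In v l') by (apply (in_removelast_in _ _ Hv)).
    destruct (in_app_or _ _ _ (I' v H)) as [Hv1|[Hv1|[]]]; [|congruence].
    rewrite Forall_forall in F. auto.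
Qed.


Lemma INV (S : T -> Prop) t0 : rooted_subtree le S -> ~ S t0 -> (forall s, lt s t0 -> S s) ->
  forall n l u a, length l <= n -> walk adj u l -> Forall (fun w => ~ G S w) l -> Vt a u -> le t0 a ->
  forall v b, In v l -> Vt b v -> le t0 b.
Proof.
  intros HS Ht0 Hdown n. induction n as [|n IH]; intros l u a Hlen W F Hu Ha v b Hv Hb.
  { destruct l; simpl in Hlen; [destruct Hv|lia]. }
  destruct (split_first (fun x => inU x) l) as [H|[l1 [w [l2 [E [F1 [b' [_ Hw]]]]]]]].
  - rewrite Forall_forall in H. exfalso. apply (H v Hv). exists b; auto.
  - subst l.
    assert (W1 : walk adj u (l1 ++ [w])).
    { apply walk_app in W as [W1 W2]. apply walk_app. split; auto. simpl in *. tauto. }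
    assert (Nb' : ~ S b').
    { intro Sb'. rewrite Forall_forall in F. apply (F w); [apply in_or_app; right; left; auto|].
      exists b'. auto. }
    assert (Hb' : le t0 b') by (eapply above_min; eauto; eapply CL; eauto).
    apply in_app_or in Hv as [Hv|[Hv|Hv]].
    + rewrite Forall_forall in F1. exfalso. apply (F1 v Hv). exists b; auto.
    + subst v. rewrite (part_disj b b' w Hb Hw). auto.
    + apply (IH l2 w b') with (v := v); auto.
      * rewrite length_app in Hlen. simpl in Hlen. lia.
      * apply walk_app in W as [_ W2]. simpl in W2. tauto.
      * apply Forall_app in F as [_ F2]. inversion F2; auto.
Qed.

Lemma NBR (S : T -> Prop) t0 u a l y : rooted_subtree le S -> ~ S t0 -> (forall s, lt s t0 -> S s) ->
  Vt a u -> le t0 a -> walk adj u l -> Forall (fun w => ~ G S w) l ->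
  adj (last l u) y -> G S y -> exists s, lt s t0 /\ Vt s y.
Proof.
  intros HS Ht0 Hdown Hu Ha W F Hy [s [Ss Hs]].
  destruct (split_last (fun x => inU x) (u :: l)) as [l1 [w [l2 [E [F2 [b [_ Hw]]]]]]].
  { exists u. split; [left; auto|exists a; auto]. }
  assert (Hwalk : walk adj w l2 /\ last l2 w = last l u /\ le t0 b).
  { destruct l1 as [|c l1'].
    - simpl in E. injection E as E1 E2. subst. split; auto. split; auto.
      rewrite (part_disj b a w Hw Hu). auto.
    - simpl in E. injection E as E1 E2. subst. split; [|split].
      + apply walk_app in W as [_ W2]. simpl in W2. tauto.
      + rewrite last_app_cons. auto.
      + apply (INV S t0 HS Ht0 Hdown (length (l1' ++ w :: l2)) (l1' ++ w :: l2) c a) with (v := w); auto.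
        apply in_or_app. right. left. auto. }
  destruct Hwalk as [W2 [E2 Hb]].
  assert (W3 : walk adj w (l2 ++ [y])).
  { apply walk_app. split; auto. rewrite E2. simpl. auto. }
  assert (Nb : ~ S b). { intro Sb. apply Ht0. eapply HS; eauto. }
  assert (Hc : le b s \/ le s b) by (eapply CL; eauto).
  assert (Hsb : le s b). { destruct Hc as [Hc|Hc]; auto. exfalso. apply Nb. eapply HS; eauto. }
  exists s. split; auto.
  destruct (comparable_below T le Htree s t0 b Hsb Hb) as [H|H].
  - split; auto. intro E3. subst. auto.
  - exfalso. apply Ht0. eapply HS; eauto.
Qed.

Lemma notin_down t0 b w : le t0 b -> Vt b w -> ~ G (fun s => lt s t0) w.
Proof.
  intros Hb Hw [s [Hs Hsw]]. rewrite (part_disj s b w Hsw Hw) in Hs.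
  eapply tlt_not_le; eauto.
Qed.

Lemma DESC t0 x0 : Vt t0 x0 -> forall b, le t0 b -> forall v, Vt b v ->
  reach_avoiding adj (G (fun s => lt s t0)) x0 v.
Proof.
  intros Hx0 b. induction (tlt_wf T le Htree b) as [b _ IH]. intros Hb v Hv.
  destruct (tle_cases T le _ _ Hb) as [E|E].
  - subst b. apply reach_in with (P := Vt t0).
    + intros w Hw. apply (notin_down t0 t0); [apply Trefl|auto].
    + apply part_conn; auto.
  - destruct (tg_cof t0 b E) as [u [Hu1 [Hu2 [x [y [Hx [Hy Hxy]]]]]]].
    apply reach_trans with y.
    + apply reach_step with x.
      * apply (IH u Hu2 Hu1 x Hx).
      * auto.
      * apply (notin_down t0 b); auto.
    + apply reach_in with (P := Vt b).
      * intros w Hw. apply (notin_down t0 b); auto.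
      * apply part_conn; auto.
Qed.

Variable xr : T -> V.
Hypothesis Hxr : forall t, Vt t (xr t) /\ U (xr t).
Hypothesis HUin : forall u, U u -> inU u.

Definition Nb (t : T) : V -> Prop := fun y =>
  G (fun s => lt s t) y /\ exists z, reach_avoiding adj (G (fun s => lt s t)) (xr t) z /\ adj z y.

Definition bad (t : T) : Prop := ~ finite_set (Nb t).

Lemma FA (S : T -> Prop) : rooted_subtree le S ->
  (forall t, ~ S t -> (forall s, lt s t -> S s) -> ~ bad t) ->
  finite_adhesion_towards adj (G S) U.
Proof.
  intros HS Hmin u Uu Nu.
  destruct (HUin u Uu) as [a [_ Hua]].
  assert (Na : ~ S a). { intro Sa. apply Nu. exists a. auto. }
  destruct (min_outside T le Htree S a HS Na) as [t0 [Ht0a [Nt0 Hdown]]].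
  assert (Fin : finite_set (Nb t0)). { apply NNPP. apply (Hmin t0 Nt0 Hdown). }
  apply finite_sub with (B := Nb t0); auto.
  intros y [Gy [z [[l [W [E F]]] Hzy]]].
  split.
  - destruct (NBR S t0 u a l y HS Nt0 Hdown Hua Ht0a W F) as [s [Hs Hsy]]; [rewrite E; auto|auto|].
    exists s. auto.
  - exists z. split; auto.
    apply reach_trans with u.
    + apply (DESC t0 (xr t0) (proj1 (Hxr t0)) a Ht0a u Hua).
    + apply reach_mono with (X := G S).
      * intros w [s [Hs Hsw]]. exists s. split; auto.
      * exists l. auto.
Qed.


Lemma minor_adj_sym X Y : minor_adj adj X Y -> minor_adj adj Y X.
Proof. intros [N [x [y [Hx [Hy Hxy]]]]]. split; [auto|]. exists y, x. repeat split; auto. apply adj_sym; auto. Qed.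

Lemma sumC (A : T -> Prop) : countable_set A ->
  countable_set (fun z : T + nat => match z with inl r => A r | inr _ => True end).
Proof.
  intros [g [_ Hg]].
  exists (fun z => match z with inl r => 2 * g r | inr n => S (2 * n) end). split; [now auto|].
  intros [a|a] [b|b] Ha Hb E; try lia.
  - f_equal. apply Hg; auto. lia.
  - f_equal. lia.
Qed.

Lemma Vt_countable s : countable_set (fun r => lt r s) -> countable_set (Vt s).
Proof. intros H. eapply card_le_trans; [apply Hslim|]. apply sumC. auto. Qed.

Lemma EARLY (Bs : (V -> Prop) -> Prop) (R : (V -> Prop) -> (V -> Prop) -> Prop) (Q L : T -> Prop) c :
  well_order_on Bs R ->
  (forall w, Bs w -> finite_set (fun w' => Bs w' /\ minor_adj adj w w' /\ R w' w)) ->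
  (forall s, Q s -> Bs (Vt s)) -> Q c ->
  (forall u, L u -> Q u /\ minor_adj adj (Vt u) (Vt c)) -> ~ finite_set L ->
  exists u, L u /\ R (Vt c) (Vt u).
Proof.
  intros [_ [_ [Htot _]]] Hfin HQ Qc HL Linf. apply NNPP. intro Hn. apply Linf.
  apply (finite_inj_pre Vt L (fun w' => Bs w' /\ minor_adj adj (Vt c) w' /\ R w' (Vt c))).
  - intros x y _ _ E. apply Vt_inj_eq. auto.
  - intros u Lu. destruct (HL u Lu) as [Qu Hadj]. split; [auto|split; [apply minor_adj_sym; auto|]].
    destruct (Htot (Vt u) (Vt c)) as [E|[E|E]]; auto.
    + exfalso. destruct Hadj as [N _]. auto.
    + exfalso. apply Hn. eauto.
  - apply Hfin. auto.
Qed.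

Lemma INF_CHAIN (M L : T -> Prop) c : (exists x, M x) -> (forall x, M x -> lt x c) ->
  (forall x, M x -> exists y, M y /\ lt x y) -> (forall u, L u -> M u) ->
  (forall x, M x -> exists u, L u /\ le x u) -> ~ finite_set L.
Proof.
  intros [x0 Mx0] Hc Hnomax HLM Hcof [l Hl].
  assert (Hub : forall l : list T, exists x, M x /\ forall v, In v l -> M v -> lt v x).
  { clear Hl. intros l1. induction l1 as [|a l1 IH].
    - exists x0. split; auto. intros v [].
    - destruct IH as [x [Mx Hx]].
      destruct (classic (M a)) as [Ma|Na].
      + destruct (Hnomax a Ma) as [y [My Hay]].
        assert (Hxc : le x c) by (apply Tltle; auto). assert (Hyc : le y c) by (apply Tltle; auto).
        destruct (Tcomp x y c Hxc Hyc) as [Hxy|Hyx].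
        * exists y. split; [exact My|]. intros v [E|Hv] Mv; [subst; exact Hay|].
          apply Tltle_t with x; [apply Hx; auto|exact Hxy].
        * exists x. split; [exact Mx|]. intros v [E|Hv] Mv; [subst; apply Tltle_t with y; auto|apply Hx; auto].
      + exists x. split; [exact Mx|]. intros v [E|Hv] Mv; [subst; contradiction|apply Hx; auto]. }
  destruct (Hub l) as [x [Mx Hx]]. destruct (Hcof x Mx) as [u [Lu Hxu]].
  pose proof (Hx u (Hl u Lu) (HLM u Lu)) as H. apply (Tirr u). eapply Tltle_t; eauto.
Qed.


Hypothesis Hminor : forall Bs : (V -> Prop) -> Prop,
  branch_sets adj Bs -> rooted_branch_sets U Bs ->
  (forall X, Bs X -> countable_set X) ->
  countable_colouring_number Bs (minor_adj adj).

Lemma parts_family (Q : T -> Prop) : (forall s, Q s -> countable_set (Vt s)) ->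
  exists R : (V -> Prop) -> (V -> Prop) -> Prop,
    well_order_on (fun Z => exists s, Q s /\ Z = Vt s) R /\
    forall w, (exists s, Q s /\ w = Vt s) ->
      finite_set (fun w' => (exists s, Q s /\ w' = Vt s) /\ minor_adj adj w w' /\ R w' w).
Proof.
  intros HQ. apply Hminor.
  - split; [|split].
    + intros Z [s [_ E]]. subst. apply part_ne.
    + intros Z Y x [s [_ E1]] [t [_ E2]] N H1 H2. subst. apply N.
      rewrite (part_disj s t x H1 H2). auto.
    + intros Z [s [_ E]]. subst. apply part_conn.
  - intros Z [s [_ E]]. subst. exists (xr s). apply Hxr.
  - intros Z [s [Qs E]]. subst. auto.
Qed.

Lemma edge_minor_adj u c x y : u <> c -> Vt u x -> Vt c y -> adj x y -> minor_adj adj (Vt u) (Vt c).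
Proof. intros N Hx Hy Hxy. split; [intro E; apply N; apply Vt_inj_eq; auto|]. exists x, y. auto. Qed.

Definition mpick (C M : T -> Prop) (d : T) : T :=
  pick (fun m => C m /\ ~ M m /\ forall y, C y /\ ~ M y -> y = m \/ lt m y) d.

Lemma height_countable t : countable_set (fun s => lt s t).
Proof.
  apply NNPP. intro Hunc.
  set (C := fun s => lt s t /\ countable_set (fun r => lt r s)).
  assert (Cunc : ~ countable_set C).
  { intro CC.
    destruct (classic (exists s, lt s t /\ ~ countable_set (fun r => lt r s))) as [Hex|Hno].
    - destruct (down_wo T le Htree t) as [_ [_ [_ Hmin]]].
      destruct (Hmin (fun s => le s t /\ lt s t /\ ~ countable_set (fun r => lt r s))) as [s0 [[_ [Hs0 Ns0]] Hm]].
      { tauto. }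
      { destruct Hex as [s [H1 H2]]. exists s. split; [apply Tltle|]; auto. }
      apply Ns0. apply countable_sub with (B := C); auto.
      intros r Hr. split; [eapply Tltt; eauto|].
      apply NNPP. intro Nr.
      destruct (Hm r) as [E|E].
      + split; [apply Tltle; eapply Tltt; eauto|split; [eapply Tltt; eauto|auto]].
      + subst. eapply Tirr; eauto.
      + eapply Tasym; eauto.
    - apply Hunc. apply countable_sub with (B := C); auto.
      intros r Hr. split; auto. apply NNPP. intro Nr. apply Hno. eauto. }
  assert (CV : forall s, C s -> countable_set (Vt s)).
  { intros s [_ Hs]. apply Vt_countable. auto. }
  destruct (parts_family C CV) as [R [HR Hfin]].
  set (F := fun s s' => C s' /\ minor_adj adj (Vt s) (Vt s') /\ R (Vt s') (Vt s)).
  assert (Ffin : forall s, C s -> finite_set (F s)).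
  { intros s Cs.
    apply (finite_inj_pre Vt (F s) (fun w' => (exists s0, C s0 /\ w' = Vt s0) /\ minor_adj adj (Vt s) w' /\ R w' (Vt s))).
    - intros x y _ _ E. apply Vt_inj_eq. auto.
    - intros s' [C' [A' R']]. split; [exists s'; auto|auto].
    - apply Hfin. eauto. }
  set (m := fun M : T -> Prop => mpick C M t).
  assert (Hm : forall M : T -> Prop, countable_set M ->
            C (m M) /\ ~ M (m M) /\ forall y, C y /\ ~ M y -> y = m M \/ lt (m M) y).
  { intros M CM. unfold m, mpick. apply pick_spec.
    destruct (down_wo T le Htree t) as [_ [_ [_ Hmin]]].
    destruct (Hmin (fun y => le y t /\ C y /\ ~ M y)) as [z [[_ [Cz Nz]] Hz]].
    { tauto. }
    { destruct (uncountable_nonempty _ (uncountable_minus C M Cunc CM)) as [y [Cy Ny]].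
      exists y. split; [apply Tltle; apply Cy|auto]. }
    exists z. split; [auto|split; [auto|]]. intros y [Cy Ny]. apply Hz. split; [apply Tltle; apply Cy|auto]. }
  set (Gen := fun (M : T -> Prop) s' => M s' \/ (exists s'', M s'' /\ F s'' s') \/ s' = m M).
  set (step := fun (M : T -> Prop) s => C s /\ exists s', Gen M s' /\ le s s').
  set (Mn := fix Mn (n : nat) : T -> Prop := match n with 0 => fun _ => False | S k => step (Mn k) end).
  assert (MnC : forall n s, Mn n s -> C s).
  { intros [|n] s H; [destruct H|apply H]. }
  assert (Mndown : forall n s r, Mn n s -> C r -> le r s -> Mn n r).
  { intros [|n] s r H Cr Hr; [destruct H|]. destruct H as [Cs [s' [Gs' Hss']]].
    split; auto. exists s'. split; auto. eapply Ttrans; eauto. }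
  assert (Clt : forall s, C s -> le s t). { intros s [Hs _]. apply Tltle; auto. }
  assert (Mncount : forall n, countable_set (Mn n)).
  { induction n as [|n IH].
    - exists (fun _ => 0). split; [intros; exact I|]. intros x y [].
    - assert (GC : countable_set (Gen (Mn n))).
      { apply countable_union2; [auto|]. apply countable_union2.
        - apply countable_union; auto. intros s'' Hs''. apply finite_countable. apply Ffin. eauto.
        - exists (fun _ => 0). split; [intros; exact I|]. intros x y Ex Ey _. congruence. }
      apply countable_sub with (B := fun s => exists s', Gen (Mn n) s' /\ (fun s'' => lt s'' s' \/ s'' = s') s).
      + intros s [Cs [s' [G' H']]]. exists s'. split; auto. destruct (Tcases _ _ H'); auto.
      + apply countable_union; auto. intros s' G'. apply countable_union2.
        * assert (Cs' : C s').
          { destruct G' as [G'|[[s'' [Ms'' Fs'']]|E]].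
            - eapply MnC; eauto.
            - apply Fs''.
            - subst. apply (Hm _ IH). }
          apply Cs'.
        * exists (fun _ => 0). split; [intros; exact I|]. intros x y Ex Ey _. congruence. }
  assert (Mnm : forall n, Mn (S n) (m (Mn n)) /\ C (m (Mn n)) /\ ~ Mn n (m (Mn n))).
  { intros n. destruct (Hm _ (Mncount n)) as [H1 [H2 H3]]. split; auto.
    split; auto. exists (m (Mn n)). split; [right; right; auto|apply Trefl]. }
  assert (Mlt : forall (M : T -> Prop) c, (forall s, M s -> C s) -> (forall s r, M s -> C r -> le r s -> M r) ->
             C c -> ~ M c -> forall x, M x -> lt x c).
  { intros M c MC Md Cc Nc x Mx.
    destruct (Tcomp x c t (Clt x (MC x Mx)) (Clt c Cc)) as [H|H].
    - destruct (Tcases _ _ H) as [E|E]; auto. subst. contradiction.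
    - exfalso. apply Nc. apply (Md x c); auto. }
  set (Mall := fun s => exists n, Mn n s).
  assert (Mallc : countable_set Mall).
  { apply countable_sub with (B := fun s => exists n, (fun _ : nat => True) n /\ Mn n s).
    - intros s [n H]. eauto.
    - apply countable_union; [apply countable_nat|]. intros n _. auto. }
  assert (MallC : forall s, Mall s -> C s). { intros s [n H]. eapply MnC; eauto. }
  assert (Malld : forall s r, Mall s -> C r -> le r s -> Mall r).
  { intros s r [n H] Cr Hr. exists n. eapply Mndown; eauto. }
  destruct (down_wo T le Htree t) as [_ [_ [_ Hmin]]].
  destruct (Hmin (fun y => le y t /\ C y /\ ~ Mall y)) as [c [[_ [Cc Nc]] Hcmin]].
  { tauto. }
  { destruct (uncountable_nonempty _ (uncountable_minus C Mall Cunc Mallc)) as [y [Cy Ny]].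
    exists y. split; [apply Clt; auto|auto]. }
  assert (Lc : forall x, Mall x -> lt x c) by (apply Mlt; auto).
  set (L := fun u => Mall u /\ minor_adj adj (Vt u) (Vt c)).
  assert (Linf : ~ finite_set L).
  { apply (INF_CHAIN Mall L c).
    - exists (m (Mn 0)). exists 1. apply (Mnm 0).
    - auto.
    - intros x [n Hx]. exists (m (Mn n)). split; [exists (S n); apply Mnm|].
      apply (Mlt (Mn n)); auto.
      + intros s0; apply MnC.
      + intros s0 r; apply Mndown.
      + apply Mnm.
      + apply Mnm.
    - intros u [Mu _]. auto.
    - intros x Mx. destruct (tg_cof x c (Lc x Mx)) as [u [Hxu [Huc [x' [y' [Hx' [Hy' Hxy']]]]]]].
      exists u. split; auto. split.
      + apply NNPP. intro Nu.
        assert (Cu : C u).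
        { split; [eapply Tltt; [exact Huc|apply Cc]|].
          apply countable_sub with (B := fun r => lt r c); [intros r Hr; eapply Tltt; eauto|apply Cc]. }
        destruct (Hcmin u) as [E|E].
        * split; [apply Clt; auto|auto].
        * subst. eapply Tirr; eauto.
        * eapply Tasym; eauto.
      + apply (edge_minor_adj u c x' y'); auto. intro E; subst. eapply Tirr; eauto. }
  destruct (EARLY (fun Z => exists s, C s /\ Z = Vt s) R C L c HR Hfin) as [u [[[n Mu] Hadj] Ru]]; auto.
  { intros s0 Cs0. eauto. }
  { intros u [Mu Hu]. split; auto. }
  apply Nc. exists (S n). split; auto. exists c. split; [|apply Trefl].
  right; left. exists u. split; auto. split; auto.
Qed.

Lemma Vt_all_countable t : countable_set (Vt t).
Proof. apply Vt_countable. apply height_countable. Qed.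


Lemma walk_prefix c l v : walk adj c l -> In v l ->
  exists l', walk adj c l' /\ last l' c = v /\ incl l' l.
Proof.
  intros W Hv. apply in_split in Hv as [p [q E]]. subst.
  exists (p ++ [v]). split; [|split].
  - apply walk_app in W as [W1 W2]. apply walk_app. split; auto. simpl in *. tauto.
  - rewrite last_app. auto.
  - intros a Ha. apply in_app_or in Ha as [Ha|[Ha|[]]]; apply in_or_app; [left; auto|right; left; auto].
Qed.

Definition child (p t : T) : Prop := lt p t /\ forall s, lt s t -> le s p.

Section Children.
Variable p : T.
Let N := G (fun s => le s p).
Let D (t : T) (v : V) := reach_avoiding adj N (xr t) v.
Let Nt (t : T) (y : V) := N y /\ exists z, D t z /\ adj z y.

Lemma N_countable : countable_set N.
Proof.
  unfold N. apply countable_sub with (B := fun x => exists s, (fun s => lt s p \/ s = p) s /\ Vt s x).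
  - intros x [s [Hs Hx]]. exists s. split; auto. destruct (Tcases _ _ Hs); auto.
  - apply countable_union.
    + apply countable_union2; [apply height_countable|].
      exists (fun _ => 0). split; [intros; exact I|]. intros a b Ea Eb _. congruence.
    + intros s _. apply Vt_all_countable.
Qed.

Lemma child_down t : child p t -> forall s, lt s t <-> le s p.
Proof. intros [H1 H2] s. split; auto. intros H. eapply Tlelt_t; eauto. Qed.

Lemma child_G t : child p t -> forall v, G (fun s => lt s t) v <-> N v.
Proof.
  intros Ht v. unfold N. split; intros [s [Hs Hv]]; exists s; split; auto; apply (child_down t Ht); auto.
Qed.

Lemma xr_notN t : child p t -> ~ N (xr t).
Proof.
  intros Ht [s [Hs Hv]]. rewrite (part_disj s t (xr t) Hv (proj1 (Hxr t))) in Hs.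
  destruct Ht as [H1 _]. eapply Tnle; eauto.
Qed.

Lemma D_notN t v : child p t -> D t v -> ~ N v.
Proof.
  intros Ht [l [W [E F]]]. subst v. destruct (last_in_or l (xr t)) as [E|E].
  - rewrite E. apply xr_notN; auto.
  - rewrite Forall_forall in F. auto.
Qed.

Lemma Nb_Nt t : child p t -> forall y, Nb t y <-> Nt t y.
Proof.
  intros Ht y. unfold Nb, Nt, D. split.
  - intros [Gy [z [Rz Hz]]]. split; [apply (child_G t Ht); auto|].
    exists z. split; auto. eapply reach_mono; [|exact Rz]. intros v Hv. apply (child_G t Ht). auto.
  - intros [Gy [z [Rz Hz]]]. split; [apply (child_G t Ht); auto|].
    exists z. split; auto. eapply reach_mono; [|exact Rz]. intros v Hv. apply (child_G t Ht). auto.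
Qed.

Lemma Ddisj t t' z : child p t -> child p t' -> D t z -> D t' z -> t = t'.
Proof.
  intros Ht Ht' Hz Hz'.
  assert (Hr : reach_avoiding adj N (xr t) (xr t')).
  { apply reach_trans with z; auto. apply reach_sym; [apply adj_sym|apply xr_notN; auto|auto]. }
  assert (Hr' : reach_avoiding adj (G (fun s => lt s t)) (xr t) (xr t')).
  { eapply reach_mono; [|exact Hr]. intros v Hv. apply (child_G t Ht). auto. }
  destruct Hr' as [l [W [E F]]].
  assert (Hle : le t t').
  { destruct (last_in_or l (xr t)) as [E1|E1].
    - rewrite E in E1. rewrite (part_disj t t' (xr t) (proj1 (Hxr t))); [apply Trefl|].
      rewrite <- E1. apply Hxr.
    - apply (INV (fun s => lt s t) t) with (n := length l) (l := l) (u := xr t) (a := t) (v := xr t'); auto.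
      + intros s0 t0 H1 H2. eapply Tlelt_t; eauto.
      + apply Tirr.
      + apply Hxr.
      + apply Trefl.
      + rewrite <- E. auto.
      + apply Hxr. }
  destruct (Tcases _ _ Hle) as [E2|E2]; auto.
  exfalso. destruct Ht as [Hpt _]. destruct Ht' as [_ H']. apply (Tnle p t Hpt). apply H'. auto.
Qed.


Fixpoint Lfix (P : nat -> T -> Prop) (n : nat) : list T :=
  match n with 0 => [] | S k => pick (fun t => P k t /\ ~ In t (Lfix P k)) p :: Lfix P k end.

Lemma Lfix_in (P : nat -> T -> Prop) k j : k < j ->
  In (pick (fun t => P k t /\ ~ In t (Lfix P k)) p) (Lfix P j).
Proof.
  induction j as [|j IH]; intros H; [lia|]. simpl.
  destruct (Nat.eq_dec k j) as [E|E]; [subst; left; auto|right; apply IH; lia].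
Qed.

Lemma bad_children_countable : countable_set (fun t => child p t /\ bad t).
Proof.
  apply NNPP. intro Hunc.
  set (Bc := fun t => child p t /\ bad t).
  set (Ch := fun y t => Bc t /\ Nt t y).
  set (N' := fun y => N y /\ ~ countable_set (Ch y)).
  set (B' := fun t => Bc t /\ forall y, Nt t y -> N' y).
  assert (NtN : forall t y, Nt t y -> N y) by (intros t y [H _]; auto).
  assert (B'unc : ~ countable_set B').
  { intro HB'. apply Hunc. fold Bc.
    apply countable_sub with (B := fun t => (Bc t /\ ~ B' t) \/ B' t).
    { intros t Bt. destruct (classic (B' t)); auto. }
    apply countable_union2; auto.
    apply countable_sub with (B := fun t => exists y, (fun y => N y /\ countable_set (Ch y)) y /\ Ch y t).
    - intros t [Bt NB]. apply NNPP. intro Hn. apply NB. split; auto.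
      intros y Hy. split; [eauto|]. intro Cy. apply Hn. exists y. split; [split; eauto|split; auto].
    - apply countable_union.
      + apply countable_sub with (B := N); [tauto|apply N_countable].
      + intros y [_ Hy]. auto. }
  assert (N'c : countable_set N') by (apply countable_sub with (B := N); [intros y [H _]; auto|apply N_countable]).
  destruct N'c as [g [_ Hg]].
  set (P := fun k t => exists y, N' y /\ g y = k /\ Ch y t).
  set (alpha := fun y => pick (fun t => P (g y) t /\ ~ In t (Lfix P (g y))) p).
  assert (Halpha : forall y, N' y -> Ch y (alpha y) /\ ~ In (alpha y) (Lfix P (g y))).
  { intros y Ny.
    assert (Hex : exists t, P (g y) t /\ ~ In t (Lfix P (g y))).
    { apply NNPP. intro Hn. apply (proj2 Ny). apply finite_countable.
      exists (Lfix P (g y)). intros t Ct. apply NNPP. intro Nt0. apply Hn. exists t. split; auto.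
      exists y. auto. }
    destruct (pick_spec _ p Hex) as [[y' [Ny' [Eg Cy']]] Nin]. fold (alpha y) in Cy', Nin.
    assert (y' = y) by (apply Hg; auto). subst y'. auto. }
  assert (alpha_inj : forall y y', N' y -> N' y' -> alpha y = alpha y' -> y = y').
  { intros y y' Ny Ny' E. apply Hg; auto.
    destruct (lt_eq_lt_dec (g y) (g y')) as [[H|H]|H]; auto; exfalso.
    - apply (proj2 (Halpha y' Ny')). rewrite <- E. apply Lfix_in. auto.
    - apply (proj2 (Halpha y Ny)). rewrite E. apply Lfix_in. auto. }
  assert (Bcchild : forall t, Bc t -> child p t) by (intros t [H _]; auto).
  assert (alpha_child : forall y, N' y -> child p (alpha y)).
  { intros y Ny. apply Bcchild. apply (Halpha y Ny). }
  destruct (choice_on N' (fun y l => walk adj (xr (alpha y)) l /\ Forall (fun w => ~ N w) l /\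
                                    adj (last l (xr (alpha y))) y)) as [lY HlY].
  { constructor. exact []. }
  { intros y Ny. destruct (proj2 (proj1 (Halpha y Ny))) as [_ [z [[l [W [E F]]] Hz]]].
    exists l. subst z. auto. }
  set (Y := fun y v => v = y \/ v = xr (alpha y) \/ In v (lY y)).
  set (B'' := fun t => B' t /\ forall y, N' y -> alpha y <> t).
  assert (B''unc : ~ countable_set B'').
  { intro H. apply B'unc.
    apply countable_sub with (B := fun t => B'' t \/ (exists y, N' y /\ alpha y = t)).
    - intros t Bt. destruct (classic (exists y, N' y /\ alpha y = t)) as [E|E]; [right; auto|left].
      split; auto. intros y Ny E2. apply E. eauto.
    - apply countable_union2; auto. apply countable_image. exists g. split; [now auto|]. auto. }
  assert (B''child : forall t, B'' t -> child p t) by (intros t [[H _] _]; apply Bcchild; auto).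
  destruct (choice_on (fun q : T * V => B'' (fst q) /\ Nt (fst q) (snd q))
      (fun q l => walk adj (xr (fst q)) l /\ Forall (fun w => ~ N w) l /\ adj (last l (xr (fst q))) (snd q)))
      as [lW0 HlW0].
  { constructor. exact []. }
  { intros [t y] [Bt [_ [z [[l [W [E F]]] Hz]]]]. exists l. subst z. auto. }
  set (lW := fun t y => lW0 (t, y)).
  assert (HlW : forall t y, B'' t -> Nt t y -> walk adj (xr t) (lW t y) /\ Forall (fun w => ~ N w) (lW t y) /\
                 adj (last (lW t y) (xr t)) y).
  { intros t y Bt Ny. apply (HlW0 (t, y)). auto. }
  set (Wt := fun t v => v = xr t \/ exists y, Nt t y /\ In v (lW t y)).
  assert (DY : forall y v, N' y -> Y y v -> v = y \/ D (alpha y) v).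
  { intros y v Ny [E|[E|E]]; auto.
    - right. subst. apply reach_refl.
    - right. destruct (HlY y Ny) as [W [F _]]. eapply reach_prefix; eauto. }
  assert (DW : forall t v, B'' t -> Wt t v -> D t v).
  { intros t v Bt [E|[y [Ny Hv]]].
    - subst. apply reach_refl.
    - destruct (HlW t y Bt Ny) as [W [F _]]. eapply reach_prefix; eauto. }
  assert (yY : forall y y', N' y -> N' y' -> Y y' y -> y = y').
  { intros y y' Ny Ny' H. destruct (DY y' y Ny' H) as [E|E]; auto.
    exfalso. apply (D_notN (alpha y') y (alpha_child y' Ny') E). apply Ny. }
  assert (yW : forall y t, N' y -> B'' t -> ~ Wt t y).
  { intros y t Ny Bt H. apply (D_notN t y (B''child t Bt) (DW t y Bt H)). apply Ny. }
  set (Bs := fun Z => (exists y, N' y /\ Z = Y y) \/ (exists t, B'' t /\ Z = Wt t)).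
  assert (HBs : branch_sets adj Bs).
  { split; [|split].
    - intros Z [[y [_ E]]|[t [_ E]]]; subst; [exists y; left; auto|exists (xr t); left; auto].
    - intros Z Z' x [[y [Ny E]]|[t [Bt E]]] [[y' [Ny' E']]|[t' [Bt' E']]] NZ Hx Hx'; subst.
      + destruct (DY y x Ny Hx) as [E1|E1]; destruct (DY y' x Ny' Hx') as [E2|E2].
        * subst. apply NZ. congruence.
        * subst. apply (D_notN _ _ (alpha_child y' Ny') E2). apply Ny.
        * subst. apply (D_notN _ _ (alpha_child y Ny) E1). apply Ny'.
        * apply NZ. f_equal. apply alpha_inj; auto.
          apply (Ddisj _ _ x (alpha_child y Ny) (alpha_child y' Ny') E1 E2).
      + pose proof (DW t' x Bt' Hx') as E2.
        destruct (DY y x Ny Hx) as [E1|E1].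
        * subst. apply (D_notN _ _ (B''child t' Bt') E2). apply Ny.
        * apply (proj2 Bt' y Ny). apply (Ddisj _ _ x (alpha_child y Ny) (B''child t' Bt') E1 E2).
      + pose proof (DW t x Bt Hx) as E2.
        destruct (DY y' x Ny' Hx') as [E1|E1].
        * subst. apply (D_notN _ _ (B''child t Bt) E2). apply Ny'.
        * apply (proj2 Bt y' Ny'). apply (Ddisj _ _ x (alpha_child y' Ny') (B''child t Bt) E1 E2).
      + apply NZ. f_equal. apply (Ddisj _ _ x (B''child t Bt) (B''child t' Bt') (DW t x Bt Hx) (DW t' x Bt' Hx')).
    - intros Z [[y [Ny E]]|[t [Bt E]]]; subst.
      + apply (connected_star adj adj_sym _ (xr (alpha y))); [right; left; auto|].
        destruct (HlY y Ny) as [W [F Hl]].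
        intros v [E|[E|E]].
        * subst v. exists (lY y ++ [y]). split; [|split].
          -- apply walk_app. split; auto. simpl. auto.
          -- rewrite last_app. auto.
          -- apply Forall_app. split; [apply Forall_forall; intros; right; right; auto|constructor; [left; auto|constructor]].
        * subst v. exists []. simpl. split; [exact I|split; [auto|constructor]].
        * destruct (walk_prefix _ _ _ W E) as [l' [W' [E' I']]]. exists l'. split; [auto|split; [auto|]].
          apply Forall_forall. intros a Ha. right; right. auto.
      + apply (connected_star adj adj_sym _ (xr t)); [left; auto|].
        intros v [E|[y [Ny Hv]]].
        * subst v. exists []. simpl. split; [exact I|split; [auto|constructor]].
        * destruct (HlW t y Bt Ny) as [W [F _]].
          destruct (walk_prefix _ _ _ W Hv) as [l' [W' [E' I']]]. exists l'. split; [auto|split; [auto|]].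
          apply Forall_forall. intros a Ha. right. exists y. auto. }
  assert (HBr : rooted_branch_sets U Bs).
  { intros Z [[y [Ny E]]|[t [Bt E]]]; subst.
    - exists (xr (alpha y)). split; [right; left; auto|apply Hxr].
    - exists (xr t). split; [left; auto|apply Hxr]. }
  assert (HBc : forall Z, Bs Z -> countable_set Z).
  { intros Z [[y [Ny E]]|[t [Bt E]]]; subst.
    - apply finite_countable. exists (y :: xr (alpha y) :: lY y). intros v [E|[E|E]]; subst; simpl; auto.
    - apply countable_sub with (B := fun v => v = xr t \/ exists y, Nt t y /\ In v (lW t y)); [auto|].
      apply countable_union2.
      + exists (fun _ => 0). split; [intros; exact I|]. intros a b Ea Eb _. congruence.
      + apply countable_union.
        * apply countable_sub with (B := N); [intros y Hy; apply (NtN t y Hy)|apply N_countable].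
        * intros y _. apply finite_countable. apply finite_list. }
  destruct (Hminor Bs HBs HBr HBc) as [R [[_ [_ [Rtot _]]] Rfin]].
  assert (YW_adj : forall t y, B'' t -> Nt t y -> N' y -> minor_adj adj (Wt t) (Y y)).
  { intros t y Bt Ny N'y. split.
    - intro E. apply (yW y t N'y Bt). rewrite E. left. auto.
    - exists (last (lW t y) (xr t)), y. split; [|split; [left; auto|apply (HlW t y Bt Ny)]].
      destruct (last_in_or (lW t y) (xr t)) as [E|E]; [left; auto|right; exists y; auto]. }
  assert (Hkey : forall t, B'' t -> exists y, Nt t y /\ R (Wt t) (Y y)).
  { intros t Bt. apply NNPP. intro Hn.
    assert (Bad : bad t) by apply Bt.
    apply Bad. apply (finite_sub (Nb t) (Nt t)); [intros y Hy; apply (Nb_Nt t (B''child t Bt)); auto|].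
    assert (NtN' : forall y, Nt t y -> N' y) by (apply Bt).
    apply (finite_inj_pre Y (Nt t) (fun w' => Bs w' /\ minor_adj adj (Wt t) w' /\ R w' (Wt t))).
    - intros y y' Hy Hy' E. apply yY; auto. rewrite <- E. left. auto.
    - intros y Hy. split; [left; exists y; split; auto|split; [apply YW_adj; auto|]].
      destruct (Rtot (Y y) (Wt t)) as [E|[E|E]]; auto.
      + left; exists y; split; auto.
      + right; exists t; split; auto.
      + exfalso. apply (yW y t (NtN' y Hy) Bt). rewrite <- E. left. auto.
      + exfalso. apply Hn. exists y. split; auto.
    - apply Rfin. right. exists t. split; auto. }
  apply B''unc.
  apply countable_sub with (B := fun t => exists y, N' y /\ (fun t => B'' t /\ (fun w' => Bs w' /\ minor_adj adj (Y y) w' /\ R w' (Y y)) (Wt t)) t).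
  - intros t Bt. destruct (Hkey t Bt) as [y [Ny Ry]].
    assert (N'y : N' y) by (apply (proj2 (proj1 Bt)); auto).
    exists y. split; [exact N'y|]. split; [exact Bt|].
    split; [right; exists t; split; auto|split; [|exact Ry]].
    apply minor_adj_sym. apply YW_adj; auto.
  - apply countable_union; [exists g; split; [now auto|auto]|].
    intros y Ny. apply finite_countable.
    apply (finite_inj_pre Wt _ (fun w' => Bs w' /\ minor_adj adj (Y y) w' /\ R w' (Y y))).
    + intros t t' [Bt _] [Bt' _] E. apply (Ddisj _ _ (xr t) (B''child t Bt) (B''child t' Bt')).
      * apply reach_refl.
      * apply DW; auto. rewrite <- E. left. auto.
    + intros t [_ H]. exact H.
    + apply Rfin. left. exists y. auto.
Qed.

End Children.


Hypothesis HUunc : ~ countable_set U.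

Lemma T_uncountable : ~ countable_set (fun _ : T => True).
Proof.
  intros HT. apply HUunc. apply countable_sub with (B := fun x => exists t, (fun _ : T => True) t /\ Vt t x).
  - intros u Uu. destruct (HUin u Uu) as [t [_ H]]. eauto.
  - apply countable_union; auto. intros t _. apply Vt_all_countable.
Qed.

Section Closure.
Variable R0 : (V -> Prop) -> (V -> Prop) -> Prop.
Hypothesis HR0 : well_order_on (fun Z => exists s, True /\ Z = Vt s) R0.
Hypothesis HR0fin : forall w, (exists s, True /\ w = Vt s) ->
      finite_set (fun w' => (exists s, True /\ w' = Vt s) /\ minor_adj adj w w' /\ R0 w' w).

Definition op (x y : T) : Prop :=
  le y x \/ (minor_adj adj (Vt x) (Vt y) /\ R0 (Vt y) (Vt x)) \/ (child x y /\ bad y).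

Inductive cl (X : T -> Prop) : T -> Prop :=
| cl_base : forall x, X x -> cl X x
| cl_step : forall x y, cl X x -> op x y -> cl X y.

Lemma cl_rooted X : rooted_subtree le (cl X).
Proof. intros s t Ht Hst. apply cl_step with t; auto. left; auto. Qed.

Lemma cl_mono (X X' : T -> Prop) : (forall x, X x -> X' x) -> forall t, cl X t -> cl X' t.
Proof. intros H t Ht. induction Ht. - apply cl_base; auto. - eapply cl_step; eauto. Qed.

Lemma cl_point X t : cl X t -> exists x0, X x0 /\ cl (fun y => y = x0) t.
Proof.
  intros Ht. induction Ht as [x Hx|x y Hx IH Hxy].
  - exists x. split; auto. apply cl_base. auto.
  - destruct IH as [x0 [H0 H1]]. exists x0. split; auto. eapply cl_step; eauto.
Qed.

Lemma cl_FA X : (exists x, X x) -> finite_adhesion_towards adj (G (cl X)) U.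
Proof.
  intros [x0 Hx0]. apply FA; [apply cl_rooted|].
  intros t Nt Hdown Bad.
  destruct (root_le T le Htree) as [r Hr].
  assert (Cr : cl X r) by (apply (cl_rooted X r x0); [apply cl_base; auto|apply Hr]).
  assert (Hrt : lt r t). { destruct (Tcases _ _ (Hr t)) as [E|E]; auto. subst. contradiction. }
  destruct (classic (exists q, lt q t /\ forall s, lt s t -> le s q)) as [[q [Hq Hqmax]]|Hnomax].
  - apply Nt. apply (cl_step X q t); [apply Hdown; auto|]. right; right. split; [split; auto|auto].
  - set (L := fun u => lt u t /\ minor_adj adj (Vt u) (Vt t)).
    assert (Linf : ~ finite_set L).
    { apply (INF_CHAIN (fun s => lt s t) L t); auto.
      - exists r; auto.
      - intros x Hx. apply NNPP. intro Hn. apply Hnomax. exists x. split; auto.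
        intros s Hs. destruct (Tcomp s x t (Tltle _ _ Hs) (Tltle _ _ Hx)) as [H|H]; auto.
        destruct (Tcases _ _ H) as [E|E]; [subst; apply Trefl|]. exfalso. apply Hn. eauto.
      - intros u [Hu _]. auto.
      - intros x Hx. destruct (tg_cof x t Hx) as [u [Hxu [Hut [a [b [Ha [Hb Hab]]]]]]].
        exists u. split; auto. split; auto. apply (edge_minor_adj u t a b); auto.
        intro E; subst. eapply Tirr; eauto. }
    destruct (EARLY _ R0 (fun _ => True) L t HR0 HR0fin) as [u [[Hut Hadj] Ru]]; auto.
    { intros s _. exists s. auto. }
    { intros u [_ H]. auto. }
    apply Nt. apply (cl_step X u t); [apply Hdown; auto|]. right; left. auto.
Qed.

Lemma op_countable x : countable_set (op x).
Proof.
  unfold op. apply countable_union2; [|apply countable_union2].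
  - apply countable_sub with (B := fun y => lt y x \/ y = x).
    + intros y H. destruct (Tcases _ _ H); auto.
    + apply countable_union2; [apply height_countable|].
      exists (fun _ => 0). split; [intros; exact I|]. intros a b Ea Eb _. congruence.
  - apply finite_countable.
    apply (finite_inj_pre Vt _ (fun w' => (exists s, True /\ w' = Vt s) /\ minor_adj adj (Vt x) w' /\ R0 w' (Vt x))).
    + intros a b _ _ E. apply Vt_inj_eq. auto.
    + intros y [H1 H2]. split; [exists y; auto|auto].
    + apply HR0fin. exists x. auto.
  - apply bad_children_countable.
Qed.

Lemma cl_size X : card_le (cl X) (fun q : T * list nat => X (fst q)).
Proof.
  destruct (choice_on (fun _ : T => True) (fun x (h : T -> nat) => forall a b, op x a -> op x b -> h a = h b -> a = b))
    as [hx Hhx].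
  { constructor. exact (fun _ => 0). }
  { intros x _. destruct (op_countable x) as [h [_ Hh]]. exists h. auto. }
  set (dec := fun x n => pick (fun y => op x y /\ hx x y = n) x).
  assert (Hdec : forall x y, op x y -> dec x (hx x y) = y).
  { intros x y Hxy. unfold dec. destruct (pick_spec (fun y0 => op x y0 /\ hx x y0 = hx x y) x) as [H1 H2].
    { exists y. auto. }
    apply (Hhx x I); auto. }
  assert (Hrun : forall t, cl X t -> exists q : T * list nat, X (fst q) /\ fold_left dec (snd q) (fst q) = t).
  { intros t Ht. induction Ht as [x Hx|x y Hx IH Hxy].
    - exists (x, []). simpl. auto.
    - destruct IH as [[x0 l] [H1 H2]]. exists (x0, l ++ [hx x y]). simpl in *. split; auto.
      rewrite fold_left_app. simpl. rewrite H2. apply Hdec. auto. }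
  destruct (choice_on (cl X) (fun t q => X (fst q) /\ fold_left dec (snd q) (fst q) = t)) as [f Hf].
  { destruct (root_le T le Htree) as [r _]. constructor. exact (r, []). }
  { auto. }
  exists f. split.
  - intros t Ht. apply (Hf t Ht).
  - intros t t' Ht Ht' E. destruct (Hf t Ht) as [_ E1]. destruct (Hf t' Ht') as [_ E2].
    rewrite <- E1, <- E2, E. auto.
Qed.


Lemma main_construction (K : Type) (ltK : K -> K -> Prop) (I : Type) (ltI : I -> I -> Prop) :
  initial_ordinal_of ltK (fun _ : T => True) -> cofinality_order ltI ltK ->
  exists Ti : I -> T -> Prop,
    (forall i, rooted_subtree le (Ti i)) /\
    (forall i, ~ finite_set (Ti i)) /\
    (forall i, card_lt (Ti i) (fun _ : T => True)) /\
    (forall i j t, ltI i j -> Ti i t -> Ti j t) /\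
    (forall t, exists i, Ti i t) /\
    (forall l, is_limit ltI l -> forall t, Ti l t <-> exists i, ltI i l /\ Ti i t) /\
    (forall i, finite_adhesion_towards adj (G (Ti i)) U).
Proof.
  intros [WK [[HKT HTK] Hseg]] [WI [[f [Hfinc Hfcof]] _]].
  destruct HTK as [phi [_ Hphi]].
  assert (Tunc := T_uncountable).
  assert (Tinf : ~ finite_set (fun _ : T => True)) by (apply uncountable_not_finite; auto).
  assert (Kinf : ~ finite_set (fun _ : K => True)).
  { intro HK. apply Tinf. eapply finite_card_le; [|exact HK]. exists phi. split; auto. }
  assert (Kmax : forall k, exists k', ltK k k').
  { intro k. apply NNPP. intro Hn.
    assert (Hle : forall k', k' = k \/ ltK k' k).
    { intro k'. destruct (wo_tot _ _ WK k' k) as [E|[E|E]]; auto. exfalso; apply Hn; eauto. }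
    assert (Winf : ~ finite_set (fun k' => ltK k' k)).
    { intros [l Hl]. apply Kinf. exists (k :: l). intros k' _. destruct (Hle k') as [E|E]; [left; auto|right; auto]. }
    destruct (infinite_seq _ Winf) as [sq [Hsq _]].
    apply (proj2 (Hseg k)).
    eapply card_le_trans; [|apply (absorb K _ Winf)].
    exists (fun k' => if excluded_middle_informative (k' = k) then (sq 0, 1) else (k', 0)). split.
    - intros k' _. destruct (excluded_middle_informative (k' = k)) as [E|E]; simpl; auto.
      destruct (Hle k'); [contradiction|auto].
    - intros a b _ _. destruct (excluded_middle_informative (a = k)) as [Ea|Ea];
      destruct (excluded_middle_informative (b = k)) as [Eb|Eb]; intro E; try congruence;
      injection E; intros; subst; auto; try lia. }
  assert (Imax : forall i, exists i', ltI i i').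
  { intro i. destruct (Kmax (f i)) as [k Hk]. destruct (Hfcof k) as [c [[i' E] Hc]]. subst c.
    exists i'. destruct (wo_tot _ _ WI i i') as [E|[E|E]]; auto.
    - subst i'. exfalso. apply (wo_irr _ _ WK (f i)).
      destruct Hc as [E|E]; [subst k; exact Hk|apply (wo_trans _ _ WK _ k); auto].
    - exfalso. pose proof (Hfinc _ _ E) as H. apply (wo_irr _ _ WK (f i)).
      destruct Hc as [E2|E2].
      + rewrite E2 in Hk. apply (wo_trans _ _ WK _ (f i')); auto.
      + apply (wo_trans _ _ WK _ k); auto. apply (wo_trans _ _ WK _ (f i')); auto. }
  destruct (infinite_seq _ Tinf) as [sq [_ Hsq]].
  set (X0 := fun t => exists n, sq n = t).
  assert (X0c : countable_set X0).
  { apply countable_sub with (B := fun y => exists x, (fun _ : nat => True) x /\ sq x = y);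
    [intros y [n E]; exists n; auto|apply countable_image; apply countable_nat]. }
  set (A := fun i t => exists i', ltI i' i /\ (phi t = f i' \/ ltK (phi t) (f i'))).
  set (Z := fun i t => X0 t \/ A i t).
  exists (fun i => cl (Z i)).
  assert (Amono : forall i j t, ltI i j -> A i t -> A j t).
  { intros i j t Hij [i' [Hi' H]]. exists i'. split; auto. eapply wo_trans; eauto. }
  split; [|split; [|split; [|split; [|split; [|split]]]]].
  - intro i. apply cl_rooted.
  - intros i Hfin. apply nat_not_finite.
    apply (finite_inj_pre sq (fun _ => True) (cl (Z i))); auto.
    intros n _. apply cl_base. left. exists n. auto.
  - intros i. split; [apply card_le_sub; auto|]. intro HT.
    assert (HAW : card_le (A i) (fun k => ltK k (f i))).
    { exists phi. split.
      - intros t [i' [Hi' [E|E]]].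
        + rewrite E. apply Hfinc. auto.
        + eapply wo_trans; eauto.
      - intros a b _ _ E. apply Hphi; auto. }
    destruct (classic (finite_set (fun k => ltK k (f i)))) as [Wfin|Winf].
    + apply Tunc. eapply card_le_trans; [exact HT|].
      eapply card_le_trans; [apply cl_size|]. apply countable_times_list.
      apply countable_union2.
      * exact X0c.
      * apply finite_countable. eapply finite_card_le; eauto.
    + apply (proj2 (Hseg (f i))).
      eapply card_le_trans; [exact HKT|].
      eapply card_le_trans; [exact HT|].
      eapply card_le_trans; [apply cl_size|].
      apply (absorb_list _ (Z i) X0 (A i) Winf); auto.
  - intros i j t Hij Ht. apply (cl_mono (Z i)); auto. intros x [H|H]; [left; auto|right; eapply Amono; eauto].
  - intro t. destruct (Hfcof (phi t)) as [c [[i' E] Hc]]. subst c.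
    destruct (Imax i') as [i Hi]. exists i. apply cl_base. right. exists i'. auto.
  - intros l [[i0 Hi0] Hlim] t. split.
    + intros Ht. destruct (cl_point _ _ Ht) as [x0 [[Hx0|[i' [Hi' Hx0]]] H1]].
      * exists i0. split; auto. apply (cl_mono (fun y => y = x0)); auto. intros x E; subst; left; auto.
      * destruct (Hlim i' Hi') as [j [Hij Hjl]]. exists j. split; auto.
        apply (cl_mono (fun y => y = x0)); auto. intros x E; subst. right. exists i'. auto.
    + intros [i [Hil Ht]]. apply (cl_mono (Z i)); auto. intros x [H|H]; [left; auto|right; eapply Amono; eauto].
  - intros i. apply cl_FA. exists (sq 0). left. exists 0. auto.
Qed.

End Closure.

End Graph.

Theorem lemma5p1 (V : Type) (adj : V -> V -> Prop) (U : V -> Prop)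
  (T : Type) (le : T -> T -> Prop) (Vt : T -> V -> Prop) :
  simple_graph adj ->
  graph_connected adj ->
  ~ countable_set U ->
  (forall Bs : (V -> Prop) -> Prop,
      branch_sets adj Bs -> rooted_branch_sets U Bs ->
      (forall X, Bs X -> countable_set X) ->
      countable_colouring_number Bs (minor_adj adj)) ->
  order_tree le ->
  normal_semi_partition_tree adj le Vt ->
  slim le Vt ->
  rooted_parts U Vt ->
  (forall u, U u -> parts_union Vt (fun _ => True) u) ->
  exists (K : Type) (ltK : K -> K -> Prop) (I : Type) (ltI : I -> I -> Prop)
         (Ti : I -> T -> Prop),
    initial_ordinal_of ltK (fun _ : T => True) /\
    cofinality_order ltI ltK /\
    (forall i, rooted_subtree le (Ti i)) /\
    (forall i, ~ finite_set (Ti i)) /\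
    (forall i, card_lt (Ti i) (fun _ : T => True)) /\
    (forall i j t, ltI i j -> Ti i t -> Ti j t) /\
    (forall t, exists i, Ti i t) /\
    (forall l, is_limit ltI l -> forall t, Ti l t <-> exists i, ltI i l /\ Ti i t) /\
    (forall i, finite_adhesion_towards adj (parts_union Vt (Ti i)) U).
Proof.
  intros Hsimple Hconn HU Hminor Htree Hnpt Hslim Hroot HUin.
  destruct (choice (fun t x => Vt t x /\ U x) Hroot) as [xr Hxr].
  destruct (parts_family V adj U T le Vt Hnpt xr Hxr Hminor (fun _ => True)) as [R0 [HR0 HR0fin]].
  { intros s _. apply (Vt_all_countable V adj U T le Vt Hsimple Htree Hnpt Hslim xr Hxr Hminor). }
  destruct (initial_exists T) as [K [ltK HK]].
  destruct (root_le T le Htree) as [r _].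
  pose proof HK as HK'. destruct HK' as [_ [[_ [phi _]] _]].
  destruct (cof_exists K ltK (proj1 HK) (phi r)) as [I [ltI HI]].
  destruct (main_construction V adj U T le Vt Hsimple Htree Hnpt Hslim xr Hxr HUin Hminor HU
              R0 HR0 HR0fin K ltK I ltI HK HI) as [Ti HTi].
  exists K, ltK, I, ltI, Ti. split; [exact HK|]. split; [exact HI|]. exact HTi.
Qed.
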